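(* Let $\kappa=\beth_\kappa$ and let $\tau$ be a vocabulary. (Product) For $\tau$-models $M_1,M_2,N_1,N_2$: if $M_\ell$ and $N_\ell$ satisfy the same sentences of $\mathbb L^1_\kappa(\tau)$ for $\ell=1,2$, then $M_1\times M_2$ and $N_1\times N_2$ satisfy the same sentences of $\mathbb L^1_\kappa(\tau)$. Moreover, for $\theta<\kappa$ and $\alpha<\theta^+$: if $M_\ell\,\mathscr E^1_{\mathrm{qf}(\tau),\theta,\alpha}\,N_\ell$ for $\ell=1,2$ then $M_1\times M_2\,\mathscr E^1_{\mathrm{qf}(\tau),\theta,\alpha}\,N_1\times N_2$. (Sum) If $\tau$ has no function symbols, $M_1,M_2$ have disjoint universes and $N_1,N_2$ have disjoint universes, and $M_\ell$, $N_\ell$ satisfy the same $\mathbb L^1_\kappa(\tau)$-sentences for $\ell=1,2$, then $M_1+M_2$ and $N_1+N_2$ satisfy the same $\mathbb L^1_\kappa(\tau)$-sentences; and the same holds with $\mathscr E^1_{\mathrm{qf}(\tau),\theta,\alpha}$-equivalence ($\theta<\kappa$, $\alpha<\theta^+$) in place of $\mathbb L^1_\kappa$-equivalence.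
   Context: Product $M_1\times M_2$ of $\tau$-models: universe $|M_1|\times|M_2|$, each predicate $P$ holds of a tuple of pairs iff $P^{M_1}$ holds of the tuple of first coordinates and $P^{M_2}$ of the tuple of second coordinates, and function symbols act coordinatewise. Sum $M_1+M_2$ (disjoint universes, relational $\tau$): universe $|M_1|\cup|M_2|$, $P^{M_1+M_2}=P^{M_1}\cup P^{M_2}$. The game $\Game_{\Gamma,\theta,\alpha}[M_1,M_2]$: states are tuples $(A^1,A^2,h^1,h^2,g,\beta,n)$ with $A^\ell\subseteq M_\ell$, $|A^\ell|\le\theta$, $\beta\le\alpha$, $n<\omega$, $h^\ell:A^\ell\to\omega$, $g$ a partial injection $M_1\to M_2$ with $g^1=g,g^2=g^{-1}$, $\mathrm{Dom}(g^\ell)\subseteq A^\ell$, $g$ preserving every formula of $\Gamma$, and $h^\ell(a)<n$ on $\mathrm{Dom}(g^\ell)$. Start: $(\emptyset,\emptyset,\emptyset,\emptyset,\emptyset,\alpha,0)$. At state $\mathbf s_n$, AIS picks $\iota\in\{1,2\}$, $\beta_{n+1}<\beta_n$, $A'$ with $A^\iota_n\subseteq A'\subseteq M_\iota$, $|A'|\le\theta$; ISO picks a state $\mathbf s_{n+1}$ with index $n+1$ and ordinal $\beta_{n+1}$ extending $\mathbf s_n$ coordinatewise, with $A^\iota_{n+1}=A'$, $A^{3-\iota}_{n+1}=A^{3-\iota}_n\cup\mathrm{Dom}(g^{3-\iota}_{n+1})$, $h^\iota_{n+1}(a)\ge n+1$ for new $a\in A'$, and $\mathrm{Dom}(g^\iota_{n+1})=\{a\in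 A^\iota_n:h^\iota_n(a)<n+1\}$. A player without legal move loses; for $\alpha=0$ ISO wins iff the start is a state. $\mathscr E^0$: ISO has a winning strategy; $\mathscr E^1$: equivalence relation generated by $\mathscr E^0$; $\mathrm{qf}(\tau)$: atomic formulas and negations. $\mathbb L^1_\kappa=\bigcup_{\theta<\kappa}\mathbb L^1_{\le\theta}$; a sentence of $\mathbb L^1_{\le\theta}(\tau)$ is given by $\tau_1\subseteq\tau$, $|\tau_1|\le\theta$, $\alpha<\theta^+$ and at most $\beth_{\alpha+1}(\theta)$ $\tau_1$-models $M_i$; $M\models\psi$ iff $M\restriction\tau_1\,\mathscr E^1_{\mathrm{qf}(\tau_1),\theta,\alpha}\,M_i$ for some $i$. *)

(* Defs.v *)
From Stdlib Require Import Classical ClassicalEpsilon Relations Wellfounded Fin.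

Definition card_le (A B : Type) : Prop := exists f : A -> B, forall x y, f x = f y -> x = y.
Definition card_lt (A B : Type) : Prop := card_le A B /\ ~ card_le B A.
Definition card_eq (A B : Type) : Prop := card_le A B /\ card_le B A.

Record WellOrder := {
  wcar : Type;
  wlt : wcar -> wcar -> Prop;
  wlt_wf : well_founded wlt;
  wlt_trans : forall x y z, wlt x y -> wlt y z -> wlt x z;
  wlt_total : forall x y, wlt x y \/ x = y \/ wlt y x }.

(** Ordinals beta <= alpha: [Some x] is the ordinal of the initial segment
    below x, [None] is alpha itself. *)
Definition olt (W : WellOrder) (a b : option (wcar W)) : Prop :=
  match a, b with
  | Some x, Some y => wlt W x y
  | Some _, None => True
  | None, _ => False
  end.

Lemma olt_wf (W : WellOrder) : well_founded (olt W).
Proof.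
  assert (HS : forall x, Acc (olt W) (Some x)).
  { intro x. induction (wlt_wf W x) as [x _ IH].
    constructor. intros [y|] Hy; simpl in Hy.
    - apply IH; exact Hy.
    - contradiction. }
  intros [x|]; [apply HS|].
  constructor. intros [y|] Hy; [apply HS| simpl in Hy; contradiction].
Qed.

(** * Beth numbers: [beth th W b] is a type of cardinality beth_b(th),
    by recursion on the ordinal b <= W:
    beth_0 = th, beth_{b+1} = 2^{beth_b}, beth_d = sup_{b<d} beth_b (d limit). *)
Definition beth_step (th : Type) (W : WellOrder) (x : option (wcar W))
  (rec : forall y, olt W y x -> Type) : Type :=
  match excluded_middle_informative (exists y, olt W y x) with
  | right _ => th
  | left _ =>
    match excluded_middle_informative
            (exists y, olt W y x /\ forall z, olt W z x -> olt W z y \/ z = y) with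
    | left H =>
        let (y, Hy) := constructive_indefinite_description _ H in
        (rec y (proj1 Hy) -> Prop)
    | right _ => { y : option (wcar W) & { r : olt W y x & rec y r } }
    end
  end.

Definition beth (th : Type) (W : WellOrder) : option (wcar W) -> Type :=
  Fix (olt_wf W) (fun _ => Type) (beth_step th W).

(** kappa = beth_kappa (with beth_0 = aleph_0): K carries a well-order W whose
    order type is the initial ordinal of |K| and |K| = beth_{W}(aleph_0). *)
Definition beth_fixed_point (K : Type) : Prop :=
  exists W : WellOrder,
    card_eq (wcar W) K /\
    (forall x : wcar W, ~ card_le K { y : wcar W | wlt W y x }) /\
    card_eq K (beth nat W None).

Record vocab := {
  psym : Type; parity : psym -> nat;
  fsym : Type; farity : fsym -> nat }.

Record structure (t : vocab) := {
  car : Type;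
  pint : forall p : psym t, (Fin.t (parity t p) -> car) -> Prop;
  fint : forall f : fsym t, (Fin.t (farity t f) -> car) -> car }.
Arguments car {t} _.
Arguments pint {t} _ _ _.
Arguments fint {t} _ _ _.

Definition subvoc (t : vocab) (SP : psym t -> Prop) (SF : fsym t -> Prop) : vocab := {|
  psym := { p | SP p }; parity := fun p => parity t (proj1_sig p);
  fsym := { f | SF f }; farity := fun f => farity t (proj1_sig f) |}.

Definition reduct (t : vocab) (SP : psym t -> Prop) (SF : fsym t -> Prop)
  (M : structure t) : structure (subvoc t SP SF) := {|
  car := car M;
  pint := fun (p : psym (subvoc t SP SF)) args => pint M (proj1_sig p) args;
  fint := fun (f : fsym (subvoc t SP SF)) args => fint M (proj1_sig f) args |}.

Definition prod_struct (t : vocab) (M1 M2 : structure t) : structure t := {|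
  car := (car M1 * car M2)%type;
  pint := fun p args => pint M1 p (fun i => fst (args i)) /\ pint M2 p (fun i => snd (args i));
  fint := fun f args => (fint M1 f (fun i => fst (args i)), fint M2 f (fun i => snd (args i))) |}.

(** Sum for relational vocabularies; the universes are made disjoint by
    taking the disjoint union type. *)
Definition sum_struct (t : vocab) (H : fsym t -> False) (M1 M2 : structure t) : structure t := {|
  car := (car M1 + car M2)%type;
  pint := fun p args =>
    (exists a, (forall i, args i = inl (a i)) /\ pint M1 p a) \/
    (exists b, (forall i, args i = inr (b i)) /\ pint M2 p b);
  fint := fun f _ => match H f with end |}.

Inductive term (t : vocab) (V : Type) : Type :=
  | Var : V -> term t V
  | App : forall f : fsym t, (Fin.t (farity t f) -> term t V) -> term t V.
Arguments Var {t V} _.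
Arguments App {t V} _ _.

Inductive atomic (t : vocab) (V : Type) : Type :=
  | APred : forall p : psym t, (Fin.t (parity t p) -> term t V) -> atomic t V
  | AEq : term t V -> term t V -> atomic t V.
Arguments APred {t V} _ _.
Arguments AEq {t V} _ _.

Inductive qf (t : vocab) (V : Type) : Type :=
  | QAtom : atomic t V -> qf t V
  | QNeg : atomic t V -> qf t V.
Arguments QAtom {t V} _.
Arguments QNeg {t V} _.

Fixpoint teval {t : vocab} {V : Type} (M : structure t) (a : V -> car M) (u : term t V) : car M :=
  match u with
  | Var v => a v
  | App f args => fint M f (fun i => teval M a (args i))
  end.

Definition asat {t : vocab} {V : Type} (M : structure t) (a : V -> car M) (phi : atomic t V) : Prop :=
  match phi with
  | APred p args => pint M p (fun i => teval M a (args i))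
  | AEq u1 u2 => teval M a u1 = teval M a u2
  end.

Definition qsat {t : vocab} {V : Type} (M : structure t) (a : V -> car M) (phi : qf t V) : Prop :=
  match phi with
  | QAtom psi => asat M a psi
  | QNeg psi => ~ asat M a psi
  end.

Section Game.
Variables (t : vocab) (theta : Type) (alpha : WellOrder).

Record state (M1 M2 : structure t) := {
  sA1 : car M1 -> Prop;
  sA2 : car M2 -> Prop;
  sh1 : car M1 -> nat;   (* h^1, relevant on A^1 only *)
  sh2 : car M2 -> nat;   (* h^2, relevant on A^2 only *)
  sg : car M1 -> car M2 -> Prop;  (* graph of the partial injection g *)
  sbeta : option (wcar alpha);
  sn : nat }.
Arguments sA1 {M1 M2} _ _.
Arguments sA2 {M1 M2} _ _.
Arguments sh1 {M1 M2} _ _.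
Arguments sh2 {M1 M2} _ _.
Arguments sg {M1 M2} _ _ _.
Arguments sbeta {M1 M2} _.
Arguments sn {M1 M2} _.

Definition preserves_qf (M1 M2 : structure t) (g : car M1 -> car M2 -> Prop) : Prop :=
  forall (k : nat) (phi : qf t (Fin.t k)) (a : Fin.t k -> car M1) (b : Fin.t k -> car M2),
    (forall i, g (a i) (b i)) -> (qsat M1 a phi <-> qsat M2 b phi).

Definition partial_inj {A B : Type} (g : A -> B -> Prop) : Prop :=
  (forall x y y', g x y -> g x y' -> y = y') /\ (forall x x' y, g x y -> g x' y -> x = x').

Definition is_state (M1 M2 : structure t) (s : state M1 M2) : Prop :=
  card_le { x | sA1 s x } theta /\ card_le { y | sA2 s y } theta /\
  partial_inj (sg s) /\
  (forall x y, sg s x y -> sA1 s x) /\ (forall x y, sg s x y -> sA2 s y) /\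
  preserves_qf M1 M2 (sg s) /\
  (forall x y, sg s x y -> sh1 s x < sn s) /\ (forall x y, sg s x y -> sh2 s y < sn s).

Definition swap (M1 M2 : structure t) (s : state M1 M2) : state M2 M1 := {|
  sA1 := sA2 s; sA2 := sA1 s; sh1 := sh2 s; sh2 := sh1 s;
  sg := fun y x => sg s x y; sbeta := sbeta s; sn := sn s |}.

(** ISO's legal answers s' when AIS played iota = 1, beta' and A'. *)
Definition iso_response (M1 M2 : structure t) (s : state M1 M2)
  (beta' : option (wcar alpha)) (A' : car M1 -> Prop) (s' : state M1 M2) : Prop :=
  is_state M1 M2 s' /\ sn s' = S (sn s) /\ sbeta s' = beta' /\
  (forall x, sA1 s x -> sA1 s' x) /\ (forall y, sA2 s y -> sA2 s' y) /\
  (forall x, sA1 s x -> sh1 s' x = sh1 s x) /\ (forall y, sA2 s y -> sh2 s' y = sh2 s y) /\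
  (forall x y, sg s x y -> sg s' x y) /\
  (forall x, sA1 s' x <-> A' x) /\
  (forall y, sA2 s' y <-> (sA2 s y \/ exists x, sg s' x y)) /\
  (forall x, A' x -> ~ sA1 s x -> S (sn s) <= sh1 s' x) /\
  (forall x, (exists y, sg s' x y) <-> (sA1 s x /\ sh1 s x < S (sn s))).

(** ISO wins from s (the game is well founded as beta decreases, so this
    inductive definition is equivalent to ISO having a winning strategy). *)
Inductive iso_wins (M1 M2 : structure t) (s : state M1 M2) : Prop :=
  | iso_wins_intro :
      (forall (beta' : option (wcar alpha)) (A' : car M1 -> Prop),
          olt alpha beta' (sbeta s) -> (forall x, sA1 s x -> A' x) ->
          card_le { x | A' x } theta ->
          exists s', iso_response M1 M2 s beta' A' s' /\ iso_wins M1 M2 s') ->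
      (forall (beta' : option (wcar alpha)) (A' : car M2 -> Prop),
          olt alpha beta' (sbeta s) -> (forall y, sA2 s y -> A' y) ->
          card_le { y | A' y } theta ->
          exists s', iso_response M2 M1 (swap M1 M2 s) beta' A' (swap M1 M2 s') /\
                     iso_wins M1 M2 s') ->
      iso_wins M1 M2 s.

Definition start_state (M1 M2 : structure t) : state M1 M2 := {|
  sA1 := fun _ => False; sA2 := fun _ => False; sh1 := fun _ => 0; sh2 := fun _ => 0;
  sg := fun _ _ => False; sbeta := None; sn := 0 |}.

Definition E0 (M1 M2 : structure t) : Prop :=
  is_state M1 M2 (start_state M1 M2) /\ iso_wins M1 M2 (start_state M1 M2).

Definition E1 : relation (structure t) := clos_refl_sym_trans (structure t) E0.

End Game.

Record L1sent (t : vocab) (K : Type) := {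
  s_theta : Type;
  s_theta_lt : card_lt s_theta K;
  s_SP : psym t -> Prop;
  s_SF : fsym t -> Prop;
  s_voc_card : card_le ({ p | s_SP p } + { f | s_SF f }) s_theta;
  s_alpha : WellOrder;
  s_alpha_lt : card_le (wcar s_alpha) s_theta;   (* alpha < theta^+ *)
  s_I : Type;
  s_I_card : card_le s_I (beth s_theta s_alpha None -> Prop);  (* <= beth_{alpha+1}(theta) *)
  s_models : s_I -> structure (subvoc t s_SP s_SF) }.
Arguments s_theta {t K} _.
Arguments s_SP {t K} _ _.
Arguments s_SF {t K} _ _.
Arguments s_alpha {t K} _.
Arguments s_I {t K} _.
Arguments s_models {t K} _ _.

Definition L1sat (t : vocab) (K : Type) (M : structure t) (psi : L1sent t K) : Prop :=
  exists i, E1 (subvoc t (s_SP psi) (s_SF psi)) (s_theta psi) (s_alpha psi)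
              (reduct t (s_SP psi) (s_SF psi) M) (s_models psi i).

Definition L1_equiv (t : vocab) (K : Type) (M N : structure t) : Prop :=
  forall psi : L1sent t K, L1sat t K M psi <-> L1sat t K N psi.

(* Main.v *)
Require Import Defs.
From Stdlib Require Import Classical ClassicalEpsilon Relations Wellfounded List Lia PeanoNat.
From Stdlib Require Import FunctionalExtensionality PropExtensionality.

Definition cid {A : Type} {P : A -> Prop} (H : exists x, P x) : {x | P x} :=
  constructive_indefinite_description P H.

Lemma not_inf_list (T : Type) : ~ card_le nat T -> exists l : list T, forall x, In x l.
Proof.
  intro Hn. apply NNPP. intro Hl.
  assert (H : forall l : list T, exists x, ~ In x l).
  { intro l. apply NNPP. intro H1. apply Hl. exists l. intro x.
    apply NNPP. intro H2. apply H1. exists x. exact H2. }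
  set (next := fun l => proj1_sig (cid (H l))).
  assert (Hnext : forall l, ~ In (next l) l) by (intro l; exact (proj2_sig (cid (H l)))).
  set (f := fix f (n : nat) : list T := match n with 0 => nil | S n => next (f n) :: f n end).
  assert (Hsub : forall m n, m < n -> In (next (f m)) (f n)).
  { intros m n; induction n as [|n IH]; intro Hmn; [lia|].
    simpl. destruct (Nat.eq_dec m n) as [->|Hne]; [left; reflexivity|].
    right. apply IH. lia. }
  apply Hn. exists (fun n => next (f n)). intros x y Hxy.
  destruct (Nat.lt_trichotomy x y) as [H1|[H1|H1]]; auto.
  - exfalso. apply (Hnext (f y)). rewrite <- Hxy. apply Hsub; auto.
  - exfalso. apply (Hnext (f x)). rewrite Hxy. apply Hsub; auto.
Qed.

Section BW.
Variable P : Type.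
Variable le : P -> P -> Prop.
Hypothesis le_refl : forall x, le x x.
Hypothesis le_trans : forall x y z, le x y -> le y z -> le x z.
Hypothesis le_antisym : forall x y, le x y -> le y x -> x = y.
Variable b0 : P.
Variable sup : (P -> Prop) -> P.
Definition chain (C : P -> Prop) := forall x y, C x -> C y -> le x y \/ le y x.
Hypothesis sup_ub : forall C, chain C -> forall x, C x -> le x (sup C).
Hypothesis sup_lub : forall C, chain C -> forall u, le b0 u -> (forall x, C x -> le x u) -> le (sup C) u.
Hypothesis sup_b0 : forall C, le b0 (sup C).
Variable f : P -> P.
Hypothesis f_infl : forall x, le x (f x).

Definition closed (S : P -> Prop) :=
  (forall x, S x -> S (f x)) /\ (forall C, chain C -> (forall x, C x -> S x) -> S (sup C)).
Definition tower (x : P) := forall S, closed S -> S x.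

Lemma tower_closed : closed tower.
Proof.
  split.
  - intros x Hx S HS. apply (proj1 HS). apply Hx; auto.
  - intros C HC HCt S HS. apply (proj2 HS); auto. intros x Hx. apply HCt; auto.
Qed.

Lemma tower_b0 : forall x, tower x -> le b0 x.
Proof.
  intros x Hx. apply Hx. split.
  - intros y Hy. eapply le_trans; eauto.
  - intros C _ _. apply sup_b0.
Qed.

Definition lt x y := le x y /\ x <> y.
Definition extreme c := forall x, tower x -> lt x c -> le (f x) c.

Lemma lemA : forall c, tower c -> extreme c -> forall x, tower x -> le x c \/ le (f c) x.
Proof.
  intros c Hc He x Hx.
  assert (HS : closed (fun x => tower x /\ (le x c \/ le (f c) x))).
  { split.
    - intros y [Hy [H1|H1]]; split; [apply (proj1 tower_closed); auto| |apply (proj1 tower_closed); auto|].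
      + destruct (classic (y = c)) as [->|Hne].
        * right. apply le_refl.
        * left. apply He; auto. split; auto.
      + right. eapply le_trans; eauto.
    - intros C HC HCS. split.
      + apply (proj2 tower_closed); auto. intros y Hy. apply (HCS y Hy).
      + destruct (classic (exists y, C y /\ le (f c) y)) as [[y [Hy1 Hy2]]|Hno].
        * right. eapply le_trans; eauto.
        * left. apply sup_lub; auto. apply tower_b0; auto. intros y Hy.
          destruct (proj2 (HCS y Hy)) as [H1|H1]; auto. exfalso; eauto. }
  apply (Hx _ HS).
Qed.

Lemma lemB : forall c, tower c -> extreme c.
Proof.
  intros c Hc.
  assert (HS : closed (fun c => tower c /\ extreme c)).
  { split.
    - intros c0 [Hc0 He0]. split; [apply (proj1 tower_closed); auto|].
      intros x Hx [Hle Hne].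
      destruct (lemA c0 Hc0 He0 x Hx) as [H1|H1].
      + destruct (classic (x = c0)) as [->|Hne2].
        * apply le_refl.
        * eapply le_trans; [apply He0; auto; split; auto|apply f_infl].
      + exfalso. apply Hne. apply le_antisym; auto.
    - intros C HC HCS. split.
      + apply (proj2 tower_closed); auto. intros y Hy. apply (HCS y Hy).
      + intros x Hx [Hle Hne].
        destruct (classic (exists c', C c' /\ ~ le c' x)) as [[c' [Hc'1 Hc'2]]|Hno].
        * destruct (HCS c' Hc'1) as [Htc' Hec'].
          destruct (lemA c' Htc' Hec' x Hx) as [H1|H1].
          -- destruct (classic (x = c')) as [->|Hne2].
             ++ exfalso. apply Hc'2. apply le_refl.
             ++ eapply le_trans; [apply Hec'; auto; split; auto|apply sup_ub; auto].
          -- exfalso. apply Hc'2. eapply le_trans; [apply f_infl|exact H1].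
        * exfalso. apply Hne. apply le_antisym; auto. apply sup_lub; auto.
          apply tower_b0; auto. intros y Hy. apply NNPP. intro H; apply Hno; eauto. }
  apply (Hc _ HS).
Qed.

Lemma BW_fix : exists s, tower s /\ le (f s) s.
Proof.
  assert (Hch : chain tower).
  { intros x y Hx Hy. destruct (lemA y Hy (lemB y Hy) x Hx) as [H|H]; auto.
    right. eapply le_trans; [apply f_infl|exact H]. }
  exists (sup tower). split.
  - apply (proj2 tower_closed); auto.
  - apply sup_ub; auto. apply (proj1 tower_closed). apply (proj2 tower_closed); auto.
Qed.

End BW.

Section Absorb.
Variable T : Type.
Variable e : nat -> T.
Hypothesis e_inj : forall x y, e x = e y -> x = y.

Definition Rel := bool * T -> T -> Prop.
Definition rle (R R' : Rel) := forall x y, R x y -> R' x y.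
Definition b2n (b : bool) := if b then 1 else 0.
Definition R0 : Rel := fun p y => exists k, snd p = e k /\ y = e (2 * k + b2n (fst p)).
Definition rng (R : Rel) x := exists z, R z x.
Definition Good (R : Rel) :=
  (forall x y y', R x y -> R x y' -> y = y') /\
  (forall x x' y, R x y -> R x' y -> x = x') /\
  (forall i x y, R (i, x) y -> rng R x) /\
  (forall i x, rng R x -> exists y, R (i, x) y).

Lemma b2n_inj : forall i i' k k', 2 * k + b2n i = 2 * k' + b2n i' -> i = i' /\ k = k'.
Proof. intros [|] [|] k k'; simpl; intro H; try (exfalso; lia); split; auto; lia. Qed.

Lemma Good_R0 : Good R0.
Proof.
  unfold R0; split; [|split; [|split]].
  - intros [i x] y y' [k [H1 H2]] [k' [H1' H2']]; simpl in *. subst.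
    apply e_inj in H1'. subst. reflexivity.
  - intros [i x] [i' x'] y [k [H1 H2]] [k' [H1' H2']]; simpl in *. subst.
    apply e_inj in H2'. apply b2n_inj in H2'. destruct H2'; subst. reflexivity.
  - intros i x y [k [H1 H2]]; simpl in *. subst.
    destruct (Nat.Even_or_Odd k) as [[m Hm]|[m Hm]].
    + exists (false, e m). exists m. simpl. split; auto; f_equal; lia.
    + exists (true, e m). exists m. simpl. split; auto; f_equal; lia.
  - intros i x [z [k [H1 H2]]]. subst. eexists. exists (2 * k + b2n (fst z)). simpl. split; reflexivity.
Qed.

Definition Csup (C : Rel -> Prop) : Rel := fun x y => R0 x y \/ exists R, C R /\ R x y.

Lemma rle_antisym : forall R R', rle R R' -> rle R' R -> R = R'.
Proof.
  intros R R' H1 H2. apply functional_extensionality; intro x.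
  apply functional_extensionality; intro y. apply propositional_extensionality; split; auto.
Qed.

Definition GoodB R := Good R /\ rle R0 R.

Lemma Csup_good : forall C, chain Rel rle C -> (forall R, C R -> GoodB R) -> GoodB (Csup C).
Proof.
  intros C HC HG.
  assert (Hw : forall x y, Csup C x y -> exists R, GoodB R /\ R x y /\ rle R (Csup C)).
  { intros x y [H|[R [HR H]]].
    - exists R0. split; [split; [apply Good_R0| intros ? ? h; exact h]|].
      split; auto. intros ? ? h; left; exact h.
    - exists R. split; auto. split; auto. intros ? ? h; right; eauto. }
  assert (Hcmp : forall R R', (R = R0 \/ C R) -> (R' = R0 \/ C R') -> rle R R' \/ rle R' R).
  { intros R R' [->|H] [->|H'].
    - left; intros ? ? h; exact h.
    - left. apply (HG _ H').
    - right. apply (HG _ H).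
    - apply HC; auto. }
  assert (Hw2 : forall x y, Csup C x y -> exists R, (R = R0 \/ C R) /\ R x y).
  { intros x y [H|[R [HR H]]]; [exists R0|exists R]; auto. }
  assert (HG2 : forall R, (R = R0 \/ C R) -> Good R).
  { intros R [->|H]; [apply Good_R0|apply HG; auto]. }
  split; [|intros ? ? h; left; exact h].
  split; [|split; [|split]].
  - intros x y y' H1 H2. destruct (Hw2 _ _ H1) as [R [HR Hr]]. destruct (Hw2 _ _ H2) as [R' [HR' Hr']].
    destruct (Hcmp R R' HR HR') as [Hl|Hl].
    + apply (proj1 (HG2 R' HR') x); auto.
    + apply (proj1 (HG2 R HR) x); auto.
  - intros x x' y H1 H2. destruct (Hw2 _ _ H1) as [R [HR Hr]]. destruct (Hw2 _ _ H2) as [R' [HR' Hr']].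
    destruct (Hcmp R R' HR HR') as [Hl|Hl].
    + apply (proj1 (proj2 (HG2 R' HR')) x x' y); auto.
    + apply (proj1 (proj2 (HG2 R HR)) x x' y); auto.
  - intros i x y H1. destruct (Hw2 _ _ H1) as [R [HR Hr]].
    destruct (proj1 (proj2 (proj2 (HG2 R HR))) i x y Hr) as [z Hz].
    exists z. destruct HR as [->|HR]; [left; auto|right; eauto].
  - intros i x [z H1]. destruct (Hw2 _ _ H1) as [R [HR Hr]].
    destruct (proj2 (proj2 (proj2 (HG2 R HR))) i x (ex_intro _ z Hr)) as [y Hy].
    exists y. destruct HR as [->|HR]; [left; auto|right; eauto].
Qed.

Definition fext (R : Rel) : Rel :=
  match excluded_middle_informative (exists R', GoodB R' /\ rle R R' /\ ~ rle R' R) with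
  | left H => proj1_sig (cid H)
  | right _ => R
  end.

Lemma fext_infl : forall R, rle R (fext R).
Proof.
  intro R. unfold fext. destruct excluded_middle_informative as [H|H].
  - destruct (proj2_sig (cid H)) as [_ [H2 _]]. exact H2.
  - intros ? ? h; exact h.
Qed.

Lemma exists_maximal : exists s, GoodB s /\ forall R', GoodB R' -> rle s R' -> rle R' s.
Proof.
  destruct (BW_fix Rel rle (fun x a b h => h) (fun x y z h1 h2 a b h => h2 _ _ (h1 _ _ h))
              rle_antisym R0 Csup) with (f := fext) as [s [Hs Hfs]].
  - intros C HC R HR x y H. right. eauto.
  - intros C HC u Hu Hub x y [H|[R [HR H]]]; [apply Hu; auto| apply (Hub R); auto].
  - intros C x y h. left; exact h.
  - apply fext_infl.
  - assert (HG : GoodB s).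
    { apply Hs. split.
      - intros R HR. unfold fext. destruct excluded_middle_informative as [H|H]; auto.
        exact (proj1 (proj2_sig (cid H))).
      - intros C HC HCg. apply Csup_good; auto. }
    exists s. split; auto. intros R' HR' Hle. apply NNPP. intro Hn.
    unfold fext in Hfs. destruct excluded_middle_informative as [H|H].
    + destruct (proj2_sig (cid H)) as [_ [_ H3]]. apply H3. exact Hfs.
    + apply H. exists R'. auto.
Qed.

Lemma absorb_bool : card_le (bool * T) T.
Proof.
  destruct exists_maximal as [s [[HG HR0] Hmax]].
  destruct HG as [G1 [G2 [G3 G4]]].
  assert (Hfin : ~ card_le nat {x | ~ rng s x}).
  { intros [e' He']. set (e2 := fun k => proj1_sig (e' k)).
    assert (He2 : forall k k', e2 k = e2 k' -> k = k').
    { intros k k' Hk. apply He'. apply eq_sig_hprop; auto. intros; apply proof_irrelevance. }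
    assert (He2n : forall k, ~ rng s (e2 k)) by (intro k; exact (proj2_sig (e' k))).
    set (R' := fun (p : bool * T) y => s p y \/ exists k, snd p = e2 k /\ y = e2 (2 * k + b2n (fst p))).
    assert (Hrng : forall x, rng R' x -> rng s x \/ exists k, x = e2 k).
    { intros x [z [Hz|[k [_ Hk]]]]; [left; exists z; auto|right; eauto]. }
    assert (HR'g : GoodB R').
    { split; [|intros ? ? h; left; apply HR0; exact h].
      split; [|split; [|split]].
      - intros [i x] y y' [H1|[k [H1 H1']]] [H2|[k' [H2 H2']]]; simpl in *.
        + eauto.
        + subst. exfalso. apply (He2n k'). eapply G3; eauto.
        + subst. exfalso. apply (He2n k). eapply G3; eauto.
        + subst. apply He2 in H2. subst. reflexivity.
      - intros [i x] [i' x'] y [H1|[k [H1 H1']]] [H2|[k' [H2 H2']]]; simpl in *.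
        + eauto.
        + subst. exfalso. apply (He2n (2 * k' + b2n i')). exists (i, x); auto.
        + subst. exfalso. apply (He2n (2 * k + b2n i)). exists (i', x'); auto.
        + subst. apply He2 in H2'. apply b2n_inj in H2'. destruct H2'; subst. reflexivity.
      - intros i x y [H1|[k [H1 H1']]]; simpl in *.
        + destruct (G3 i x y H1) as [z Hz]. exists z. left; auto.
        + subst. destruct (Nat.Even_or_Odd k) as [[m Hm]|[m Hm]].
          * exists (false, e2 m). right. exists m. simpl. split; auto; f_equal; lia.
          * exists (true, e2 m). right. exists m. simpl. split; auto; f_equal; lia.
      - intros i x Hx. destruct (Hrng x Hx) as [Hs|[k ->]].
        + destruct (G4 i x Hs) as [y Hy]. exists y. left; auto.
        + exists (e2 (2 * k + b2n i)). right. exists k. auto. }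
    assert (Hle : rle s R') by (intros ? ? h; left; exact h).
    specialize (Hmax R' HR'g Hle (false, e2 0) (e2 0)).
    apply (He2n 0). eapply G3. apply Hmax. right. exists 0. simpl. auto. }
  destruct (not_inf_list _ Hfin) as [l Hl].
  set (l' := map (@proj1_sig _ _) l).
  assert (Hl' : forall x, ~ rng s x -> exists n, nth_error l' n = Some x).
  { intros x Hx. apply In_nth_error. unfold l'. apply in_map_iff. exists (exist _ x Hx). auto. }
  set (m := 2 * length l').
  set (isE := fun y => exists k, y = e k).
  set (sig := fun y => match excluded_middle_informative (isE y) with
                       | left H => e (proj1_sig (cid H) + m) | right _ => y end).
  assert (Hsig : forall y y', sig y = sig y' -> y = y').
  { intros y y' H. unfold sig in H.
    destruct (excluded_middle_informative (isE y)) as [H1|H1];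
    destruct (excluded_middle_informative (isE y')) as [H2|H2].
    - destruct (cid H1) as [k Hk]; destruct (cid H2) as [k' Hk']; simpl in H.
      apply e_inj in H. subst. f_equal. lia.
    - exfalso. apply H2. exists (proj1_sig (cid H1) + m). auto.
    - exfalso. apply H1. exists (proj1_sig (cid H2) + m). auto.
    - exact H. }
  assert (Hsig2 : forall y n, n < m -> sig y <> e n).
  { intros y n Hn H. unfold sig in H. destruct (excluded_middle_informative (isE y)) as [H1|H1].
    - apply e_inj in H. lia.
    - apply H1. exists n. auto. }
  set (F := fun p : bool * T =>
    match excluded_middle_informative (rng s (snd p)) with
    | left H => sig (proj1_sig (cid (G4 (fst p) (snd p) H)))
    | right H => e (2 * proj1_sig (cid (Hl' _ H)) + b2n (fst p))
    end).
  exists F. intros [i x] [i' x']. unfold F; simpl.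
  destruct (excluded_middle_informative (rng s x)) as [H1|H1];
  destruct (excluded_middle_informative (rng s x')) as [H2|H2]; intro H.
  - apply Hsig in H. destruct (cid (G4 i x H1)) as [y Hy]; destruct (cid (G4 i' x' H2)) as [y' Hy'].
    simpl in H. subst. eapply G2; eauto.
  - exfalso. destruct (cid (Hl' x' H2)) as [n Hn]. simpl in H.
    assert (n < length l') by (apply nth_error_Some; congruence).
    eapply Hsig2; [|exact H]. unfold m. destruct i'; simpl; lia.
  - exfalso. destruct (cid (Hl' x H1)) as [n Hn]. simpl in H.
    assert (n < length l') by (apply nth_error_Some; congruence).
    eapply Hsig2; [|symmetry; exact H]. unfold m. destruct i; simpl; lia.
  - destruct (cid (Hl' x H1)) as [n Hn]; destruct (cid (Hl' x' H2)) as [n' Hn']. simpl in H.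
    apply e_inj in H. apply b2n_inj in H. destruct H; subst. rewrite Hn in Hn'. congruence.
Qed.

End Absorb.

Lemma card_le_trans : forall A B C, card_le A B -> card_le B C -> card_le A C.
Proof. intros A B C [f Hf] [g Hg]. exists (fun x => g (f x)). auto. Qed.

Lemma absorb_sum (T X Y : Type) : card_le nat T -> card_le X T -> card_le Y T -> card_le (X + Y) T.
Proof.
  intros [e He] [f Hf] [g Hg]. apply (card_le_trans _ (bool * T)).
  - exists (fun z => match z with inl x => (true, f x) | inr y => (false, g y) end).
    intros [x|y] [x'|y'] H; inversion H; f_equal; auto.
  - exact (absorb_bool T e He).
Qed.

Lemma card_le_union (A : Type) (P Q : A -> Prop) : card_le {x | P x \/ Q x} ({x | P x} + {x | Q x}).
Proof.
  exists (fun z => match excluded_middle_informative (P (proj1_sig z)) with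
           | left H => inl (exist _ _ H)
           | right H => inr (exist Q (proj1_sig z) (match proj2_sig z with or_introl h => False_ind _ (H h) | or_intror h => h end)) end).
  intros [x Hx] [y Hy]. simpl.
  destruct (excluded_middle_informative (P x)); destruct (excluded_middle_informative (P y)); intro H;
    inversion H; subst; f_equal; apply proof_irrelevance.
Qed.

Section Frame.
Variables (t : vocab) (theta : Type) (alpha : WellOrder).

Definition Side1 (M N : structure t) (Q : state t alpha M N -> Prop) : Prop :=
  forall s, Q s -> forall beta' (A' : car M -> Prop),
    olt alpha beta' (sbeta t alpha M N s) -> (forall x, sA1 t alpha M N s x -> A' x) ->
    card_le {x | A' x} theta ->
    exists s', iso_response t theta alpha M N s beta' A' s' /\ Q s'.

Definition swapQ (M N : structure t) (Q : state t alpha M N -> Prop) : state t alpha N M -> Prop :=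
  fun u => Q (swap t alpha N M u).

Lemma swap_swap (M N : structure t) (s : state t alpha M N) : swap t alpha N M (swap t alpha M N s) = s.
Proof. destruct s; reflexivity. Qed.

Lemma bf_wins (M N : structure t) (Q : state t alpha M N -> Prop) :
  Side1 M N Q -> Side1 N M (swapQ M N Q) -> forall s, Q s -> iso_wins t theta alpha M N s.
Proof.
  intros H1 H2.
  assert (Hm : forall b s, sbeta t alpha M N s = b -> Q s -> iso_wins t theta alpha M N s).
  { intro b. induction (olt_wf alpha b) as [b _ IH]. intros s Hb Hs. subst b.
    constructor.
    - intros beta' A' Hlt HA Hc. destruct (H1 s Hs beta' A' Hlt HA Hc) as [s' [Hr Hq]].
      exists s'. split; auto. apply (IH (sbeta t alpha M N s')); auto.
      destruct Hr as [_ [_ [Hb _]]]. rewrite Hb. exact Hlt.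
    - intros beta' A' Hlt HA Hc.
      assert (Hq : swapQ M N Q (swap t alpha M N s)) by (unfold swapQ; rewrite swap_swap; exact Hs).
      destruct (H2 _ Hq beta' A' Hlt HA Hc) as [u [Hr Hu]].
      exists (swap t alpha N M u). rewrite swap_swap. split; auto.
      apply (IH (sbeta t alpha N M u)); auto.
      destruct Hr as [_ [_ [Hb _]]]. rewrite Hb. exact Hlt. }
  intros s Hs. eapply Hm; eauto.
Qed.

Lemma Side1_iff (M N : structure t) (Q Q' : state t alpha M N -> Prop) :
  (forall s, Q s <-> Q' s) -> Side1 M N Q -> Side1 M N Q'.
Proof.
  intros Hiff H s Hs beta' A' H1 H2 H3. apply Hiff in Hs.
  destruct (H s Hs beta' A' H1 H2 H3) as [s' [Hr Hq]]. exists s'. split; auto. apply Hiff; auto.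
Qed.

Lemma is_state_swap (M N : structure t) (s : state t alpha M N) :
  is_state t theta alpha M N s -> is_state t theta alpha N M (swap t alpha M N s).
Proof.
  intros [C1 [C2 [[P1 P2] [D1 [D2 [Pr [H1 H2]]]]]]].
  unfold is_state; simpl. split; [exact C2|]. split; [exact C1|].
  split; [split; intros; eauto|]. split; [intros; eauto|]. split; [intros; eauto|].
  split; [|split; intros; eauto].
  intros kk phi a b Hab. symmetry. apply Pr. auto.
Qed.

Definition WQ (M N : structure t) (s : state t alpha M N) :=
  is_state t theta alpha M N s /\ iso_wins t theta alpha M N s.

Lemma WQ_side1 (M N : structure t) : Side1 M N (WQ M N).
Proof.
  intros s [Hs Hw] beta' A' H1 H2 H3. destruct Hw as [W1 W2].
  destruct (W1 beta' A' H1 H2 H3) as [s' [Hr Hw']]. exists s'. split; auto.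
  split; auto. exact (proj1 Hr).
Qed.

Lemma WQ_side2 (M N : structure t) : Side1 N M (swapQ M N (WQ M N)).
Proof.
  intros u [Hs Hw] beta' A' H1 H2 H3. destruct Hw as [W1 W2].
  rewrite swap_swap in W2.
  destruct (W2 beta' A' H1 H2 H3) as [s' [Hr Hw']]. exists (swap t alpha M N s'). split; auto.
  unfold swapQ, WQ. rewrite swap_swap. split; auto.
  pose proof (is_state_swap _ _ _ (proj1 Hr)) as Hi. rewrite swap_swap in Hi. exact Hi.
Qed.

End Frame.

Section Pres.
Variable t : vocab.

Lemma teval_prod (M1 M2 : structure t) V (a : V -> car (prod_struct t M1 M2)) (u : term t V) :
  teval (prod_struct t M1 M2) a u = (teval M1 (fun v => fst (a v)) u, teval M2 (fun v => snd (a v)) u).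
Proof.
  induction u as [v|f args IH]; simpl; [destruct (a v); reflexivity|].
  f_equal; f_equal; apply functional_extensionality; intro i; rewrite IH; reflexivity.
Qed.

Lemma asat_prod (M1 M2 : structure t) V (a : V -> car (prod_struct t M1 M2)) (psi : atomic t V) :
  asat (prod_struct t M1 M2) a psi <->
  asat M1 (fun v => fst (a v)) psi /\ asat M2 (fun v => snd (a v)) psi.
Proof.
  destruct psi as [p args|u1 u2]; simpl.
  - assert (E1 : (fun i => fst (teval (prod_struct t M1 M2) a (args i))) =
                (fun i => teval M1 (fun v => fst (a v)) (args i))).
    { apply functional_extensionality; intro i; rewrite teval_prod; reflexivity. }
    assert (E2 : (fun i => snd (teval (prod_struct t M1 M2) a (args i))) =
                (fun i => teval M2 (fun v => snd (a v)) (args i))).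
    { apply functional_extensionality; intro i; rewrite teval_prod; reflexivity. }
    rewrite E1, E2. tauto.
  - rewrite !teval_prod. split.
    + intro H. inversion H. auto.
    + intros [H1 H2]. rewrite H1, H2. reflexivity.
Qed.

Lemma preserves_prod (M1 M2 N1 N2 : structure t) (g1 : car M1 -> car N1 -> Prop)
  (g2 : car M2 -> car N2 -> Prop) (gP : car M1 * car M2 -> car N1 * car N2 -> Prop) :
  (forall x y, gP x y -> g1 (fst x) (fst y) /\ g2 (snd x) (snd y)) ->
  preserves_qf t M1 N1 g1 -> preserves_qf t M2 N2 g2 ->
  preserves_qf t (prod_struct t M1 M2) (prod_struct t N1 N2) gP.
Proof.
  intros Hg P1 P2 k phi a b Hab.
  assert (E1 : forall psi, asat M1 (fun v => fst (a v)) psi <-> asat N1 (fun v => fst (b v)) psi).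
  { intro psi. apply (P1 k (QAtom psi)). intro i. apply (Hg _ _ (Hab i)). }
  assert (E2 : forall psi, asat M2 (fun v => snd (a v)) psi <-> asat N2 (fun v => snd (b v)) psi).
  { intro psi. apply (P2 k (QAtom psi)). intro i. apply (Hg _ _ (Hab i)). }
  destruct phi as [psi|psi]; simpl; rewrite !asat_prod, E1, E2; tauto.
Qed.

Variable H : fsym t -> False.

Lemma term_var V (u : term t V) : exists v, u = Var v.
Proof. destruct u as [v|f args]; [eauto|destruct (H f)]. Qed.

Definition sumrel {A1 A2 B1 B2 : Type} (g1 : A1 -> B1 -> Prop) (g2 : A2 -> B2 -> Prop)
  (x : A1 + A2) (y : B1 + B2) : Prop :=
  match x, y with
  | inl a, inl b => g1 a b
  | inr p, inr q => g2 p q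
  | _, _ => False
  end.

Lemma preserves_sum (M1 M2 N1 N2 : structure t) (g1 : car M1 -> car N1 -> Prop)
  (g2 : car M2 -> car N2 -> Prop) (gS : car M1 + car M2 -> car N1 + car N2 -> Prop) :
  (forall x y, gS x y -> sumrel g1 g2 x y) -> partial_inj gS ->
  preserves_qf t M1 N1 g1 -> preserves_qf t M2 N2 g2 ->
  preserves_qf t (sum_struct t H M1 M2) (sum_struct t H N1 N2) gS.
Proof.
  intros Hg [F I] P1 P2 k phi a b Hab.
  assert (HA : forall psi : atomic t (Fin.t k),
             asat (sum_struct t H M1 M2) a psi <-> asat (sum_struct t H N1 N2) b psi).
  { intros [p args|u1 u2].
    - set (v := fun i => proj1_sig (cid (term_var _ (args i)))).
      assert (Hv : forall i, args i = Var (v i)) by (intro i; exact (proj2_sig (cid (term_var _ (args i))))).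
      assert (Ea : (fun i => teval (sum_struct t H M1 M2) a (args i)) = (fun i => a (v i)))
        by (apply functional_extensionality; intro i; rewrite Hv; reflexivity).
      assert (Eb : (fun i => teval (sum_struct t H N1 N2) b (args i)) = (fun i => b (v i)))
        by (apply functional_extensionality; intro i; rewrite Hv; reflexivity).
      change (pint (sum_struct t H M1 M2) p (fun i => teval (sum_struct t H M1 M2) a (args i)) <->
              pint (sum_struct t H N1 N2) p (fun i => teval (sum_struct t H N1 N2) b (args i))).
      rewrite Ea, Eb. simpl.
      split.
      + intros [[a1 [Ha1 Hp]]|[a2 [Ha2 Hp]]].
        * assert (Hb : forall i, exists y, b (v i) = inl y /\ g1 (a1 i) y).
          { intro i. pose proof (Hg _ _ (Hab (v i))) as Hr. rewrite Ha1 in Hr.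
            destruct (b (v i)) as [y|y]; simpl in Hr; [eauto|destruct Hr]. }
          set (b1 := fun i => proj1_sig (cid (Hb i))).
          left. exists b1. split; [intro i; exact (proj1 (proj2_sig (cid (Hb i))))|].
          apply (P1 _ (QAtom (APred p (fun i => Var i))) a1 b1); [|exact Hp].
          intro i. exact (proj2 (proj2_sig (cid (Hb i)))).
        * assert (Hb : forall i, exists y, b (v i) = inr y /\ g2 (a2 i) y).
          { intro i. pose proof (Hg _ _ (Hab (v i))) as Hr. rewrite Ha2 in Hr.
            destruct (b (v i)) as [y|y]; simpl in Hr; [destruct Hr|eauto]. }
          set (b1 := fun i => proj1_sig (cid (Hb i))).
          right. exists b1. split; [intro i; exact (proj1 (proj2_sig (cid (Hb i))))|].
          apply (P2 _ (QAtom (APred p (fun i => Var i))) a2 b1); [|exact Hp].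
          intro i. exact (proj2 (proj2_sig (cid (Hb i)))).
      + intros [[a1 [Ha1 Hp]]|[a2 [Ha2 Hp]]].
        * assert (Hb : forall i, exists y, a (v i) = inl y /\ g1 y (a1 i)).
          { intro i. pose proof (Hg _ _ (Hab (v i))) as Hr. rewrite Ha1 in Hr.
            destruct (a (v i)) as [y|y]; simpl in Hr; [eauto|destruct Hr]. }
          set (b1 := fun i => proj1_sig (cid (Hb i))).
          left. exists b1. split; [intro i; exact (proj1 (proj2_sig (cid (Hb i))))|].
          apply (P1 _ (QAtom (APred p (fun i => Var i))) b1 a1); [|exact Hp].
          intro i. exact (proj2 (proj2_sig (cid (Hb i)))).
        * assert (Hb : forall i, exists y, a (v i) = inr y /\ g2 y (a2 i)).
          { intro i. pose proof (Hg _ _ (Hab (v i))) as Hr. rewrite Ha2 in Hr.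
            destruct (a (v i)) as [y|y]; simpl in Hr; [destruct Hr|eauto]. }
          set (b1 := fun i => proj1_sig (cid (Hb i))).
          right. exists b1. split; [intro i; exact (proj1 (proj2_sig (cid (Hb i))))|].
          apply (P2 _ (QAtom (APred p (fun i => Var i))) b1 a2); [|exact Hp].
          intro i. exact (proj2 (proj2_sig (cid (Hb i)))).
    - destruct (term_var _ u1) as [v1 ->]. destruct (term_var _ u2) as [v2 ->]. simpl.
      split; intro E.
      + apply (F (a v1)); auto. rewrite E. auto.
      + apply (I _ _ (b v1)); auto. rewrite E. auto. }
  destruct phi as [psi|psi]; simpl; rewrite HA; tauto.
Qed.

End Pres.

Arguments sA1 {t alpha M1 M2} s _.
Arguments sA2 {t alpha M1 M2} s _.
Arguments sh1 {t alpha M1 M2} s _.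
Arguments sh2 {t alpha M1 M2} s _.
Arguments sg {t alpha M1 M2} s _ _.
Arguments sbeta {t alpha M1 M2} s.
Arguments sn {t alpha M1 M2} s.
Arguments swap {t alpha M1 M2} s.
Arguments is_state {t} theta {alpha M1 M2} s.
Arguments iso_response {t} theta {alpha M1 M2} s beta' A' s'.

Ltac dstate H c1 c2 f i d1 d2 p b1 b2 := destruct H as [c1 [c2 [[f i] [d1 [d2 [p [b1 b2]]]]]]].
Ltac dresp H is hn hb ha1 ha2 hh1 hh2 hg ha1e ha2e hnew hdom :=
  destruct H as [is [hn [hb [ha1 [ha2 [hh1 [hh2 [hg [ha1e [ha2e [hnew hdom]]]]]]]]]]].

Lemma image_card {A B : Type} (P : A * B -> Prop) :
  card_le {a | exists b, P (a, b)} {x | P x}.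
Proof.
  exists (fun z => exist P (proj1_sig z, proj1_sig (cid (proj2_sig z))) (proj2_sig (cid (proj2_sig z)))).
  intros [a Ha] [a' Ha'] H. simpl in H. inversion H. subst. f_equal. apply proof_irrelevance.
Qed.

Lemma image_card2 {A B : Type} (P : A * B -> Prop) :
  card_le {b | exists a, P (a, b)} {x | P x}.
Proof.
  exists (fun z => exist P (proj1_sig (cid (proj2_sig z)), proj1_sig z) (proj2_sig (cid (proj2_sig z)))).
  intros [a Ha] [a' Ha'] H. simpl in H. inversion H. subst. f_equal. apply proof_irrelevance.
Qed.

Lemma range_card {A B : Type} (G : A -> B -> Prop) (D : A -> Prop) :
  partial_inj G -> (forall x y, G x y -> D x) -> card_le {y | exists x, G x y} {x | D x}.
Proof.
  intros [F I] HD.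
  exists (fun z => exist D (proj1_sig (cid (proj2_sig z))) (HD _ _ (proj2_sig (cid (proj2_sig z))))).
  intros [y Hy] [y' Hy'] H. simpl in H. inversion H as [H1].
  destruct (cid Hy) as [x Hx]; destruct (cid Hy') as [x' Hx']. simpl in H1. subst.
  assert (y = y') by (eapply F; eauto). subst. f_equal. apply proof_irrelevance.
Qed.

Lemma card_le_iff {A : Type} (P Q : A -> Prop) : (forall x, P x -> Q x) -> card_le {x | P x} {x | Q x}.
Proof.
  intro H. exists (fun z => exist Q (proj1_sig z) (H _ (proj2_sig z))).
  intros [x Hx] [y Hy] E. inversion E. subst. f_equal. apply proof_irrelevance.
Qed.


Ltac elim_max := repeat match goal with
  | |- context [Nat.max ?a ?b] => let E := fresh in destruct (Nat.max_spec a b) as [[? E]|[? E]]; rewrite E in *; clear E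
  | H : context [Nat.max ?a ?b] |- _ => let E := fresh in destruct (Nat.max_spec a b) as [[? E]|[? E]]; rewrite E in *; clear E
  end.
Ltac mlia := elim_max; lia.
Lemma max_step n X h : h <= Nat.max n X -> h <= Nat.max (S n) X.
Proof. intro H. mlia. Qed.
Lemma mx1 a b c : a <= Nat.max c (Nat.max a b). Proof. mlia. Qed.
Lemma mx2 a b c : b <= Nat.max c (Nat.max a b). Proof. mlia. Qed.
Lemma mx0 a b c : c <= Nat.max c (Nat.max a b). Proof. mlia. Qed.
Section Prod.
Variables (t : vocab) (theta : Type) (alpha : WellOrder).
Hypothesis Habs : forall X Y, card_le X theta -> card_le Y theta -> card_le (X + Y) theta.

Lemma union_card {A : Type} (P Q : A -> Prop) :
  card_le {x | P x} theta -> card_le {x | Q x} theta -> card_le {x | P x \/ Q x} theta.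
Proof. intros H1 H2. eapply card_le_trans; [apply card_le_union|]. apply Habs; auto. Qed.

Variables (M1 M2 N1 N2 : structure t).

Definition plink (S : state t alpha (prod_struct t M1 M2) (prod_struct t N1 N2))
  (s1 : state t alpha M1 N1) (s2 : state t alpha M2 N2) : Prop :=
  sn S = sn s1 /\ sn S = sn s2 /\ sbeta S = sbeta s1 /\ sbeta S = sbeta s2 /\
  (forall x, sA1 S x -> sA1 s1 (fst x) /\ sA1 s2 (snd x) /\ sh1 s1 (fst x) <= sh1 S x /\
     sh1 s2 (snd x) <= sh1 S x /\ sh1 S x <= Nat.max (sn S) (Nat.max (sh1 s1 (fst x)) (sh1 s2 (snd x)))) /\
  (forall y, sA2 S y -> sA2 s1 (fst y) /\ sA2 s2 (snd y) /\ sh2 s1 (fst y) <= sh2 S y /\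
     sh2 s2 (snd y) <= sh2 S y /\ sh2 S y <= Nat.max (sn S) (Nat.max (sh2 s1 (fst y)) (sh2 s2 (snd y)))) /\
  (forall x y, sg S x y -> sg s1 (fst x) (fst y) /\ sg s2 (snd x) (snd y)).

Definition Qp (Q1 : state t alpha M1 N1 -> Prop) (Q2 : state t alpha M2 N2 -> Prop)
  (S : state t alpha (prod_struct t M1 M2) (prod_struct t N1 N2)) : Prop :=
  is_state theta S /\ exists s1 s2, Q1 s1 /\ is_state theta s1 /\ Q2 s2 /\ is_state theta s2 /\ plink S s1 s2.

Lemma prod_side1 Q1 Q2 : Side1 t theta alpha M1 N1 Q1 -> Side1 t theta alpha M2 N2 Q2 ->
  Side1 t theta alpha (prod_struct t M1 M2) (prod_struct t N1 N2) (Qp Q1 Q2).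
Proof.
  intros HQ1 HQ2 St [IsS [s1 [s2 [Hq1 [Is1 [Hq2 [Is2 Hl]]]]]]] beta' A' Hlt HAS HcA.
  destruct Hl as [Ln1 [Ln2 [Lb1 [Lb2 [LA1 [LA2 Lg]]]]]].
  set (A1' := fun a => sA1 s1 a \/ exists p, A' (a, p)).
  set (A2' := fun (p : car M2) => sA1 s2 p \/ exists a : car M1, A' (a, p)).
  pose proof Is1 as Is1c. pose proof Is2 as Is2c. pose proof IsS as IsSc.
  dstate Is1c C11 C21 F1 I1 D11 D21 P1 B11 B21.
  dstate Is2c C12 C22 F2 I2 D12 D22 P2 B12 B22.
  dstate IsSc C1S C2S FS IS D1S D2S PS B1S B2S.
  assert (Hc1 : card_le {a | A1' a} theta).
  { apply union_card; auto. eapply card_le_trans; [apply image_card|exact HcA]. }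
  assert (Hc2 : card_le {p | A2' p} theta).
  { apply union_card; auto. eapply card_le_trans; [|exact HcA].
    apply image_card2. }
  destruct (HQ1 s1 Hq1 beta' A1') as [s1' [Hr1 Hq1']].
  { rewrite <- Lb1; auto. } { intros x Hx; left; auto. } { auto. }
  destruct (HQ2 s2 Hq2 beta' A2') as [s2' [Hr2 Hq2']].
  { rewrite <- Lb2; auto. } { intros x Hx; left; auto. } { auto. }
  pose proof Hr1 as Hr1c. pose proof Hr2 as Hr2c.
  dresp Hr1c Is1' Hn1 Hb1 HA11 HA21 Hh11 Hh21 Hg1 HA1e1 HA2e1 Hnew1 Hdom1.
  dresp Hr2c Is2' Hn2 Hb2 HA12 HA22 Hh12 Hh22 Hg2 HA1e2 HA2e2 Hnew2 Hdom2.
  pose proof Is1' as Is1c'. pose proof Is2' as Is2c'.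
  dstate Is1c' C11' C21' F1' I1' D11' D21' P1' B11' B21'.
  dstate Is2c' C12' C22' F2' I2' D12' D22' P2' B12' B22'.
  set (n := sn St).
  set (G := fun (x : car M1 * car M2) (y : car N1 * car N2) =>
              sA1 St x /\ sh1 St x < S n /\ sg s1' (fst x) (fst y) /\ sg s2' (snd x) (snd y)).
  set (h1' := fun x => match excluded_middle_informative (sA1 St x) with
                       | left _ => sh1 St x
                       | right _ => Nat.max (S n) (Nat.max (sh1 s1' (fst x)) (sh1 s2' (snd x))) end).
  set (h2' := fun y => match excluded_middle_informative (sA2 St y) with
                       | left _ => sh2 St y
                       | right _ => Nat.max (sh2 s1' (fst y)) (sh2 s2' (snd y)) end).
  set (B2 := fun y => sA2 St y \/ exists x, G x y).
  exists (Build_state t alpha (prod_struct t M1 M2) (prod_struct t N1 N2) A' B2 h1' h2' G beta' (S n)).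
  assert (GF : forall x y y', G x y -> G x y' -> y = y').
  { intros [a p] [b q] [b' q'] [_ [_ [H1 H2]]] [_ [_ [H1' H2']]]. simpl in *.
    f_equal; eauto. }
  assert (GI : forall x x' y, G x y -> G x' y -> x = x').
  { intros [a p] [a' p'] [b q] [_ [_ [H1 H2]]] [_ [_ [H1' H2']]]. simpl in *.
    f_equal; eauto. }
  assert (Gold : forall x y, sg St x y -> G x y).
  { intros x y H. destruct (Lg x y H) as [H1 H2]. split; [eapply D1S; eauto|].
    split; [apply Nat.lt_lt_succ_r; exact (B1S x y H)|]. split; [apply Hg1; auto|apply Hg2; auto]. }
  assert (Hh2G : forall x y, G x y -> h2' y < S n).
  { intros x y [Hx [Hhx [H1 H2]]]. unfold h2'.
    destruct (excluded_middle_informative (sA2 St y)) as [Hy|Hy].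
    - destruct (LA2 y Hy) as [Hy1 [Hy2 [_ [_ Hle]]]].
      pose proof (B21' _ _ H1) as E1. pose proof (B22' _ _ H2) as E2.
      rewrite Hh21 in E1 by auto. rewrite Hh22 in E2 by auto.
      rewrite Hn1 in E1. rewrite Hn2 in E2. fold n in Hle. rewrite <- Ln1 in E1. rewrite <- Ln2 in E2.
      fold n in E1, E2. mlia.
    - pose proof (B21' _ _ H1) as E1. pose proof (B22' _ _ H2) as E2.
      rewrite Hn1 in E1. rewrite Hn2 in E2. rewrite <- Ln1 in E1. rewrite <- Ln2 in E2.
      fold n in E1, E2. lia. }
  assert (IsS' : is_state theta (Build_state t alpha (prod_struct t M1 M2) (prod_struct t N1 N2) A' B2 h1' h2' G beta' (S n))).
  {
    split; [exact HcA|]. split.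
    + apply union_card; auto. eapply card_le_trans; [apply (range_card G (sA1 St))|]; auto.
      split; auto. intros x y Hg; exact (proj1 Hg).
    + split; [split; auto|]. split; [intros x y Hg; apply HAS; exact (proj1 Hg)|].
      split; [intros x y Hg; right; eauto|]. split.
      * apply (preserves_prod t M1 M2 N1 N2 (sg s1') (sg s2')); auto.
        intros x y [_ [_ [H1 H2]]]; auto.
      * split.
        -- intros x y [Hx [Hh _]]. simpl. unfold h1'.
           destruct (excluded_middle_informative (sA1 St x)) as [_|H]; [auto|contradiction].
        -- intros x y Hg. simpl. eapply Hh2G; eauto.
  }
  split; [split; [exact IsS'|split; [|split; [|split; [|split; [|split; [|split; [|split; [|split; [|split; [|split]]]]]]]]]]|].
  - reflexivity.
  - reflexivity.
  - exact HAS.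
  - intros y Hy. left; exact Hy.
  - intros x Hx. simpl. unfold h1'. destruct (excluded_middle_informative (sA1 St x)); [auto|contradiction].
  - intros y Hy. simpl. unfold h2'. destruct (excluded_middle_informative (sA2 St y)); [auto|contradiction].
  - exact Gold.
  - intro x; simpl; tauto.
  - intro y; split; intro hh; exact hh.
  - intros x Hx Hnx. simpl. unfold h1'. destruct (excluded_middle_informative (sA1 St x)); [contradiction|].
    lia.
  - intro x. simpl. split.
    + intros [y [Hx [Hh _]]]. auto.
    + intros [Hx Hh]. destruct (LA1 x Hx) as [Hx1 [Hx2 [Hl1 [Hl2 _]]]].
      destruct (proj2 (Hdom1 (fst x))) as [y1 Hy1].
      { split; auto. rewrite <- Ln1. fold n. lia. }
      destruct (proj2 (Hdom2 (snd x))) as [y2 Hy2].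
      { split; auto. rewrite <- Ln2. fold n. lia. }
      exists (y1, y2). split; auto.
  -
    split; [exact IsS'|exists s1', s2'; split; [auto|split; [auto|split; [auto|split; [auto|]]]]].
    split; [simpl; rewrite Hn1, <- Ln1; reflexivity|].
    split; [simpl; rewrite Hn2, <- Ln2; reflexivity|].
    split; [simpl; rewrite Hb1; reflexivity|].
    split; [simpl; rewrite Hb2; reflexivity|].
    split; [|split].
    + intros [a p] Hx. simpl in Hx |- *.
      assert (Ha : sA1 s1' a) by (apply HA1e1; right; exists p; exact Hx).
      assert (Hp : sA1 s2' p) by (apply HA1e2; right; exists a; exact Hx).
      split; [exact Ha|]. split; [exact Hp|].
      unfold h1'. destruct (excluded_middle_informative (sA1 St (a, p))) as [Hin|Hin].
      * destruct (LA1 _ Hin) as [Ha1 [Hp1 [L1 [L2 L3]]]]. cbn [fst snd] in *.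
        rewrite (Hh11 a Ha1), (Hh12 p Hp1). fold n in L3. split; [auto|split; [auto|exact (max_step _ _ _ L3)]].
      * split; [exact (mx1 _ _ _)|split; [exact (mx2 _ _ _)|exact (Nat.le_refl _)]].
    + intros [b q] Hy. simpl in Hy |- *. unfold h2'.
      destruct (excluded_middle_informative (sA2 St (b, q))) as [Hin|Hin].
      * destruct (LA2 _ Hin) as [Hb1' [Hqq1 [L1 [L2 L3]]]]. cbn [fst snd] in *.
        split; [apply HA21; auto|]. split; [apply HA22; auto|].
        rewrite (Hh21 b Hb1'), (Hh22 q Hqq1). fold n in L3. split; [auto|split; [auto|exact (max_step _ _ _ L3)]].
      * destruct Hy as [Hy|[x [_ [_ [H1 H2]]]]]; [contradiction|]. cbn [fst snd] in *.
        split; [eapply D21'; eauto|]. split; [eapply D22'; eauto|].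
        split; [exact (Nat.le_max_l _ _)|split; [exact (Nat.le_max_r _ _)|exact (Nat.le_max_r (S n) _)]].
    + intros x y [_ [_ [H1 H2]]]. auto.
Qed.

End Prod.

Lemma empty_card (A B : Type) : card_le {x : A | False} B.
Proof. exists (fun z => False_rect B (proj2_sig z)). intros [x []]. Qed.

Section ProdE.
Variables (t : vocab) (theta : Type) (alpha : WellOrder).
Hypothesis Habs : forall X Y, card_le X theta -> card_le Y theta -> card_le (X + Y) theta.

Lemma plink_swap (M1 M2 N1 N2 : structure t) St s1 s2 :
  plink t alpha M1 M2 N1 N2 St s1 s2 -> plink t alpha N1 N2 M1 M2 (swap St) (swap s1) (swap s2).
Proof.
  intros [a [b [c [d [e [f g]]]]]]. unfold plink; simpl.
  split; [auto|split; [auto|split; [auto|split; [auto|split; [exact f|split; [exact e|]]]]]].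
  intros x y H. apply g in H. tauto.
Qed.

Lemma E0_prod (M1 M2 N1 N2 : structure t) :
  E0 t theta alpha M1 N1 -> E0 t theta alpha M2 N2 ->
  E0 t theta alpha (prod_struct t M1 M2) (prod_struct t N1 N2).
Proof.
  intros [Is1 W1] [Is2 W2].
  set (Q := Qp t theta alpha M1 M2 N1 N2 (WQ t theta alpha M1 N1) (WQ t theta alpha M2 N2)).
  assert (IsP : is_state theta (start_state t alpha (prod_struct t M1 M2) (prod_struct t N1 N2))).
  { destruct Is1 as [_ [_ [_ [_ [_ [P1 _]]]]]]. destruct Is2 as [_ [_ [_ [_ [_ [P2 _]]]]]].
    unfold is_state; simpl. split; [apply empty_card|]. split; [apply empty_card|].
    split; [split; intros; contradiction|]. split; [intros; contradiction|].
    split; [intros; contradiction|]. split; [|split; intros; contradiction].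
    apply (preserves_prod t M1 M2 N1 N2 (fun _ _ => False) (fun _ _ => False)); auto.
    all: intros; contradiction. }
  split; [exact IsP|].
  apply (bf_wins t theta alpha _ _ Q).
  - apply prod_side1; auto; apply WQ_side1.
  - apply (Side1_iff t theta alpha _ _
             (Qp t theta alpha N1 N2 M1 M2 (swapQ t alpha M1 N1 (WQ t theta alpha M1 N1))
                 (swapQ t alpha M2 N2 (WQ t theta alpha M2 N2)))).
    + intro T. unfold swapQ, Q, Qp. split.
      * intros [IsT [u1 [u2 [H1 [H2 [H3 [H4 H5]]]]]]].
        split; [apply is_state_swap; auto|].
        exists (swap u1), (swap u2). split; [auto|]. split; [apply is_state_swap; auto|].
        split; [auto|]. split; [apply is_state_swap; auto|].
        exact (plink_swap _ _ _ _ _ _ _ H5).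
      * intros [IsT [s1 [s2 [H1 [H2 [H3 [H4 H5]]]]]]].
        split; [pose proof (is_state_swap _ _ _ _ _ _ IsT) as H; rewrite swap_swap in H; exact H|].
        exists (swap s1), (swap s2). rewrite !swap_swap.
        split; [auto|]. split; [apply is_state_swap; auto|].
        split; [auto|]. split; [apply is_state_swap; auto|].
        pose proof (plink_swap _ _ _ _ _ _ _ H5) as H6. rewrite swap_swap in H6. exact H6.
    + apply prod_side1; auto; apply WQ_side2.
  - unfold Q, Qp. split; [exact IsP|].
    exists (start_state t alpha M1 N1), (start_state t alpha M2 N2).
    split; [split; auto|]. split; [auto|]. split; [split; auto|]. split; [auto|].
    unfold plink; simpl. repeat split; intros; contradiction.
Qed.

End ProdE.

Section Sum.
Variables (t : vocab) (theta : Type) (alpha : WellOrder).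
Hypothesis Habs : forall X Y, card_le X theta -> card_le Y theta -> card_le (X + Y) theta.
Variable H : fsym t -> False.
Variables (M1 M2 N1 N2 : structure t).

Definition slink (St : state t alpha (sum_struct t H M1 M2) (sum_struct t H N1 N2))
  (s1 : state t alpha M1 N1) (s2 : state t alpha M2 N2) : Prop :=
  sn St = sn s1 /\ sn St = sn s2 /\ sbeta St = sbeta s1 /\ sbeta St = sbeta s2 /\
  (forall a, sA1 St (inl a) <-> sA1 s1 a) /\ (forall p, sA1 St (inr p) <-> sA1 s2 p) /\
  (forall b, sA2 St (inl b) <-> sA2 s1 b) /\ (forall q, sA2 St (inr q) <-> sA2 s2 q) /\
  (forall a, sh1 St (inl a) = sh1 s1 a) /\ (forall p, sh1 St (inr p) = sh1 s2 p) /\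
  (forall b, sh2 St (inl b) = sh2 s1 b) /\ (forall q, sh2 St (inr q) = sh2 s2 q) /\
  (forall x y, sg St x y <-> sumrel (sg s1) (sg s2) x y).

Definition Qs (Q1 : state t alpha M1 N1 -> Prop) (Q2 : state t alpha M2 N2 -> Prop)
  (St : state t alpha (sum_struct t H M1 M2) (sum_struct t H N1 N2)) : Prop :=
  is_state theta St /\ exists s1 s2, Q1 s1 /\ is_state theta s1 /\ Q2 s2 /\ is_state theta s2 /\ slink St s1 s2.

Lemma sum_card {A B : Type} (P : A -> Prop) (Q : B -> Prop) :
  card_le {x | P x} theta -> card_le {x | Q x} theta ->
  card_le {z : A + B | match z with inl a => P a | inr b => Q b end} theta.
Proof.
  intros H1 H2. eapply card_le_trans; [|apply Habs; [exact H1|exact H2]].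
  exists (fun z => match z with
                   | exist _ (inl a) h => inl (exist P a h)
                   | exist _ (inr b) h => inr (exist Q b h) end).
  intros [[a|b] h] [[a'|b'] h'] E; inversion E; subst; f_equal; apply proof_irrelevance.
Qed.

Lemma sumrel_pinj {A1 A2 B1 B2 : Type} (g1 : A1 -> B1 -> Prop) (g2 : A2 -> B2 -> Prop) :
  partial_inj g1 -> partial_inj g2 -> partial_inj (sumrel g1 g2).
Proof.
  intros [F1 I1] [F2 I2]. split.
  - intros [a|a] [b|b] [b'|b'] h h'; simpl in *; try contradiction; f_equal; eauto.
  - intros [a|a] [a'|a'] [b|b] h h'; simpl in *; try contradiction; f_equal; eauto.
Qed.

Lemma sum_side1 Q1 Q2 : Side1 t theta alpha M1 N1 Q1 -> Side1 t theta alpha M2 N2 Q2 ->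
  Side1 t theta alpha (sum_struct t H M1 M2) (sum_struct t H N1 N2) (Qs Q1 Q2).
Proof.
  intros HQ1 HQ2 St [IsS [s1 [s2 [Hq1 [Is1 [Hq2 [Is2 Hl]]]]]]] beta' A' Hlt HAS HcA.
  destruct Hl as [Ln1 [Ln2 [Lb1 [Lb2 [LA1l [LA1r [LA2l [LA2r [Lh1l [Lh1r [Lh2l [Lh2r Lg]]]]]]]]]]]].
  destruct (HQ1 s1 Hq1 beta' (fun a => A' (inl a))) as [s1' [Hr1 Hq1']].
  { rewrite <- Lb1; auto. } { intros x Hx; apply HAS, LA1l; auto. }
  { eapply card_le_trans; [|exact HcA]. exists (fun z => exist A' (inl (proj1_sig z)) (proj2_sig z)).
    intros [a h] [a' h'] E; inversion E; subst; f_equal; apply proof_irrelevance. }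
  destruct (HQ2 s2 Hq2 beta' (fun a => A' (inr a))) as [s2' [Hr2 Hq2']].
  { rewrite <- Lb2; auto. } { intros x Hx; apply HAS, LA1r; auto. }
  { eapply card_le_trans; [|exact HcA]. exists (fun z => exist A' (inr (proj1_sig z)) (proj2_sig z)).
    intros [a h] [a' h'] E; inversion E; subst; f_equal; apply proof_irrelevance. }
  pose proof Hr1 as Hr1c. pose proof Hr2 as Hr2c.
  dresp Hr1c Is1' Hn1 Hb1 HA11 HA21 Hh11 Hh21 Hg1 HA1e1 HA2e1 Hnew1 Hdom1.
  dresp Hr2c Is2' Hn2 Hb2 HA12 HA22 Hh12 Hh22 Hg2 HA1e2 HA2e2 Hnew2 Hdom2.
  pose proof Is1' as Is1c'. pose proof Is2' as Is2c'.
  dstate Is1c' C11' C21' F1' I1' D11' D21' P1' B11' B21'.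
  dstate Is2c' C12' C22' F2' I2' D12' D22' P2' B12' B22'.
  set (A1s := fun x => match x with inl a => sA1 s1' a | inr p => sA1 s2' p end).
  set (A2s := fun y => match y with inl b => sA2 s1' b | inr q => sA2 s2' q end).
  set (h1s := fun x => match x with inl a => sh1 s1' a | inr p => sh1 s2' p end).
  set (h2s := fun y => match y with inl b => sh2 s1' b | inr q => sh2 s2' q end).
  set (St' := Build_state t alpha (sum_struct t H M1 M2) (sum_struct t H N1 N2)
                 A1s A2s h1s h2s (sumrel (sg s1') (sg s2')) beta' (S (sn St))).
  assert (HnS1 : sn s1' = S (sn St)) by (rewrite Hn1, Ln1; reflexivity).
  assert (HnS2 : sn s2' = S (sn St)) by (rewrite Hn2, Ln2; reflexivity).
  assert (IsS' : is_state theta St').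
  { split; [|split; [|split; [|split; [|split; [|split; [|split]]]]]].
    - eapply card_le_trans; [apply (card_le_iff _ A')|exact HcA].
      intros [a|p] h; simpl in h; [apply HA1e1 in h|apply HA1e2 in h]; exact h.
    - apply sum_card; auto.
    - apply sumrel_pinj; split; auto.
    - intros [a|p] [b|q] h; simpl in *; try contradiction; eauto.
    - intros [a|p] [b|q] h; simpl in *; try contradiction; eauto.
    - apply (preserves_sum t H M1 M2 N1 N2 (sg s1') (sg s2')); auto.
      apply sumrel_pinj; split; auto.
    - intros [a|p] [b|q] h; simpl in *; try contradiction.
      + rewrite <- HnS1. eauto.
      + rewrite <- HnS2. eauto.
    - intros [a|p] [b|q] h; simpl in *; try contradiction.
      + rewrite <- HnS1. eauto.
      + rewrite <- HnS2. eauto. }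
  exists St'. split.
  - split; [exact IsS'|]. split; [reflexivity|]. split; [reflexivity|]. split.
    { intros [a|p] h; simpl; [apply HA11, LA1l|apply HA12, LA1r]; auto. }
    split. { intros [b|q] h; simpl; [apply HA21, LA2l|apply HA22, LA2r]; auto. }
    split. { intros [a|p] h; simpl; [rewrite Lh1l; apply Hh11, LA1l|rewrite Lh1r; apply Hh12, LA1r]; auto. }
    split. { intros [b|q] h; simpl; [rewrite Lh2l; apply Hh21, LA2l|rewrite Lh2r; apply Hh22, LA2r]; auto. }
    split. { intros x y h. apply Lg in h. destruct x as [a|p], y as [b|q]; simpl in *; try contradiction; auto. }
    split. { intros [a|p]; simpl; [apply HA1e1|apply HA1e2]. }
    split. { intros [b|q]; simpl; [rewrite HA2e1|rewrite HA2e2]; split.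
      - intros [h|[a h]]; [left; apply LA2l; auto|right; exists (inl a); exact h].
      - intros [h|[[a|a] h]]; simpl in h; try contradiction; [left; apply LA2l; auto|right; eauto].
      - intros [h|[a h]]; [left; apply LA2r; auto|right; exists (inr a); exact h].
      - intros [h|[[a|a] h]]; simpl in h; try contradiction; [left; apply LA2r; auto|right; eauto]. }
    split. { intros [a|p] h1 h2; simpl.
      - rewrite Ln1. apply Hnew1; auto. intro h; apply h2, LA1l; auto.
      - rewrite Ln2. apply Hnew2; auto. intro h; apply h2, LA1r; auto. }
    { intros [a|p]; simpl.
      - rewrite LA1l, Lh1l, Ln1, <- Hdom1. split.
        + intros [[b|b] h]; simpl in h; try contradiction; eauto.
        + intros [b h]. exists (inl b); exact h.
      - rewrite LA1r, Lh1r, Ln2, <- Hdom2. split.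
        + intros [[b|b] h]; simpl in h; try contradiction; eauto.
        + intros [b h]. exists (inr b); exact h. }
  - split; [exact IsS'|]. exists s1', s2'. split; [auto|split; [auto|split; [auto|split; [auto|]]]].
    unfold slink; simpl. split; [auto|]. split; [auto|]. split; [auto|]. split; [auto|].
    repeat split; auto.
Qed.

End Sum.

Section SumE.
Variables (t : vocab) (theta : Type) (alpha : WellOrder).
Hypothesis Habs : forall X Y, card_le X theta -> card_le Y theta -> card_le (X + Y) theta.
Variable H : fsym t -> False.

Lemma slink_swap (M1 M2 N1 N2 : structure t) St s1 s2 :
  slink t alpha H M1 M2 N1 N2 St s1 s2 -> slink t alpha H N1 N2 M1 M2 (swap St) (swap s1) (swap s2).
Proof.
  intros [a [b [c [d [e [f [g [h [i [j [k [l m]]]]]]]]]]]]. unfold slink; simpl.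
  do 12 (split; [auto|]).
  intros x y. rewrite m. destruct x, y; simpl; tauto.
Qed.

Lemma E0_sum (M1 M2 N1 N2 : structure t) :
  E0 t theta alpha M1 N1 -> E0 t theta alpha M2 N2 ->
  E0 t theta alpha (sum_struct t H M1 M2) (sum_struct t H N1 N2).
Proof.
  intros [Is1 W1] [Is2 W2].
  set (Q := Qs t theta alpha H M1 M2 N1 N2 (WQ t theta alpha M1 N1) (WQ t theta alpha M2 N2)).
  assert (IsP : is_state theta (start_state t alpha (sum_struct t H M1 M2) (sum_struct t H N1 N2))).
  { destruct Is1 as [_ [_ [_ [_ [_ [P1 _]]]]]]. destruct Is2 as [_ [_ [_ [_ [_ [P2 _]]]]]].
    unfold is_state; simpl. split; [apply empty_card|]. split; [apply empty_card|].
    split; [split; intros; contradiction|]. split; [intros; contradiction|].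
    split; [intros; contradiction|]. split; [|split; intros; contradiction].
    apply (preserves_sum t H M1 M2 N1 N2 (fun _ _ => False) (fun _ _ => False)); auto.
    all: try (intros; contradiction).
    split; intros; contradiction. }
  split; [exact IsP|].
  apply (bf_wins t theta alpha _ _ Q).
  - apply sum_side1; auto; apply WQ_side1.
  - apply (Side1_iff t theta alpha _ _
             (Qs t theta alpha H N1 N2 M1 M2 (swapQ t alpha M1 N1 (WQ t theta alpha M1 N1))
                 (swapQ t alpha M2 N2 (WQ t theta alpha M2 N2)))).
    + intro T. unfold swapQ, Q, Qs. split.
      * intros [IsT [u1 [u2 [H1 [H2 [H3 [H4 H5]]]]]]].
        split; [apply is_state_swap; auto|].
        exists (swap u1), (swap u2). split; [auto|]. split; [apply is_state_swap; auto|].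
        split; [auto|]. split; [apply is_state_swap; auto|].
        exact (slink_swap _ _ _ _ _ _ _ H5).
      * intros [IsT [s1 [s2 [H1 [H2 [H3 [H4 H5]]]]]]].
        split; [pose proof (is_state_swap _ _ _ _ _ _ IsT) as HH; rewrite swap_swap in HH; exact HH|].
        exists (swap s1), (swap s2). rewrite !swap_swap.
        split; [auto|]. split; [apply is_state_swap; auto|].
        split; [auto|]. split; [apply is_state_swap; auto|].
        pose proof (slink_swap _ _ _ _ _ _ _ H5) as H6. rewrite swap_swap in H6. exact H6.
    + apply sum_side1; auto; apply WQ_side2.
  - unfold Q, Qs. split; [exact IsP|].
    exists (start_state t alpha M1 N1), (start_state t alpha M2 N2).
    split; [split; auto|]. split; [auto|]. split; [split; auto|]. split; [auto|].
    unfold slink; simpl. do 4 (split; [reflexivity|]).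
    do 8 (split; [intros; tauto|]).
    intros [a|a] [b|b]; simpl; tauto.
Qed.

End SumE.

Section Mirror.
Variables (t : vocab) (theta : Type) (alpha : WellOrder).
Hypothesis Habs : forall X Y, card_le X theta -> card_le Y theta -> card_le (X + Y) theta.
Variable M : structure t.

Lemma preserves_subid (g : car M -> car M -> Prop) : (forall x y, g x y -> x = y) -> preserves_qf t M M g.
Proof.
  intros Hg k phi a b Hab. assert (a = b) by (apply functional_extensionality; intro i; apply Hg, Hab).
  subst. tauto.
Qed.

Definition Qm (s : state t alpha M M) : Prop :=
  is_state theta s /\ (forall x y, sg s x y -> x = y) /\
  (forall x, sA1 s x -> sh1 s x <= sn s) /\ (forall y, sA2 s y -> sh2 s y <= sn s).

Lemma mirror_side1 : Side1 t theta alpha M M Qm.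
Proof.
  intros s [Is [Hid [Hh1 Hh2]]] beta' A' Hlt HAS HcA.
  pose proof Is as Isc. dstate Isc C1 C2 FF II D1 D2 PP B1 B2.
  set (n := sn s).
  set (h1' := fun x => match excluded_middle_informative (sA1 s x) with left _ => sh1 s x | right _ => S n end).
  set (h2' := fun y => match excluded_middle_informative (sA2 s y) with left _ => sh2 s y | right _ => 0 end).
  set (s' := Build_state t alpha M M A' (fun y => sA2 s y \/ sA1 s y) h1' h2' (fun x y => sA1 s x /\ x = y) beta' (S n)).
  assert (IsS' : is_state theta s').
  { split; [exact HcA|]. split; [apply union_card; auto|].
    split; [split; [intros x y y' [_ h] [_ h']; congruence|intros x x' y [_ h] [_ h']; congruence]|].
    split; [intros x y [h _]; apply HAS; auto|].
    split; [intros x y [h e]; subst; right; auto|].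
    split; [apply preserves_subid; intros x y [_ e]; auto|].
    split.
    - intros x y [h _]. simpl. unfold h1'. destruct (excluded_middle_informative (sA1 s x)); [|contradiction].
      specialize (Hh1 x h). unfold n. lia.
    - intros x y [h e]. subst. simpl. unfold h2'. destruct (excluded_middle_informative (sA2 s y)) as [a|a].
      + specialize (Hh2 y a). unfold n. lia.
      + lia. }
  exists s'. split.
  - split; [exact IsS'|]. split; [reflexivity|]. split; [reflexivity|].
    split; [exact HAS|]. split; [intros y h; left; auto|].
    split; [intros x h; simpl; unfold h1'; destruct (excluded_middle_informative (sA1 s x)); [auto|contradiction]|].
    split; [intros y h; simpl; unfold h2'; destruct (excluded_middle_informative (sA2 s y)); [auto|contradiction]|].
    split; [intros x y h; simpl; split; [eapply D1; eauto|eapply Hid; eauto]|].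
    split; [intro x; simpl; tauto|].
    split; [intro y; simpl; split; [intros [h|h]; [left; auto|right; exists y; auto]|intros [h|[x [h e]]]; [left; auto|subst; right; auto]]|].
    split; [intros x h1 h2; simpl; unfold h1'; destruct (excluded_middle_informative (sA1 s x)); [contradiction|lia]|].
    intro x; simpl. split.
    + intros [y [h _]]. split; auto. specialize (Hh1 x h). unfold n; lia.
    + intros [h _]. exists x. auto.
  - split; [exact IsS'|]. split; [intros x y [_ e]; auto|]. split.
    + intros x h. simpl. unfold h1'. destruct (excluded_middle_informative (sA1 s x)) as [a|a].
      * specialize (Hh1 x a). unfold n; lia.
      * lia.
    + intros y h. simpl. unfold h2'. destruct (excluded_middle_informative (sA2 s y)) as [a|a].
      * specialize (Hh2 y a). unfold n; lia.
      * lia.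
Qed.

Lemma E0_refl : E0 t theta alpha M M.
Proof.
  assert (IsP : is_state theta (start_state t alpha M M)).
  { unfold is_state; simpl. split; [apply empty_card|]. split; [apply empty_card|].
    split; [split; intros; contradiction|]. split; [intros; contradiction|].
    split; [intros; contradiction|]. split; [|split; intros; contradiction].
    apply preserves_subid. intros; contradiction. }
  split; [exact IsP|].
  apply (bf_wins t theta alpha _ _ Qm).
  - apply mirror_side1.
  - apply (Side1_iff t theta alpha _ _ Qm); [|apply mirror_side1].
    intro u. unfold swapQ, Qm. split.
    + intros [Is [Hid [H1 H2]]]. split; [apply is_state_swap; auto|].
      split; [intros x y h; symmetry; eauto|]. split; auto.
    + intros [Is [Hid [H1 H2]]]. split.
      * pose proof (is_state_swap _ _ _ _ _ _ Is) as HH. rewrite swap_swap in HH. exact HH.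
      * split; [intros x y h; symmetry; eauto|]. split; auto.
  - split; [exact IsP|]. simpl. split; [intros; contradiction|]. split; intros; contradiction.
Qed.

End Mirror.

Lemma filter_lt {A : Type} (f g : A -> bool) (l : list A) :
  (forall y, f y = true -> g y = true) -> (exists y, In y l /\ g y = true /\ f y = false) ->
  length (filter f l) < length (filter g l).
Proof.
  intros Hfg. induction l as [|a l IH]; intros [y [Hy [Hg Hf]]]; [destruct Hy|].
  assert (Hle : forall l, length (filter f l) <= length (filter g l)).
  { clear - Hfg. intro l; induction l as [|a l IH]; simpl; [lia|].
    destruct (f a) eqn:E1; [rewrite (Hfg a E1); simpl; lia|]. destruct (g a); simpl; lia. }
  simpl. destruct Hy as [->|Hy].
  - rewrite Hg, Hf. simpl. specialize (Hle l). lia.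
  - assert (IH' := IH (ex_intro _ y (conj Hy (conj Hg Hf)))).
    destruct (f a) eqn:E1; [rewrite (Hfg a E1); simpl; lia|]. destruct (g a); simpl; lia.
Qed.

Lemma olt_trans (W : WellOrder) a b c : olt W a b -> olt W b c -> olt W a c.
Proof.
  destruct a as [a|], b as [b|], c as [c|]; simpl; auto; try contradiction.
  apply wlt_trans.
Qed.

Lemma wlt_irrefl (W : WellOrder) x : ~ wlt W x x.
Proof.
  induction (wlt_wf W x) as [x _ IH]. intro H. apply (IH x H H).
Qed.

Lemma preserves_mono (t : vocab) (M N : structure t) (g g' : car M -> car N -> Prop) :
  preserves_qf t M N g -> (forall x y, g' x y -> g x y) -> preserves_qf t M N g'.
Proof. intros P H k phi a b Hab. apply P. intro i. apply H, Hab. Qed.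

Section Delay.
Variables (t : vocab) (theta : Type) (alpha : WellOrder).
Variable l : list (wcar alpha).
Hypothesis Hl : forall x, In x l.

Definition dd (b : option (wcar alpha)) : nat :=
  length (filter (fun y => if excluded_middle_informative (olt alpha (Some y) b) then true else false) l).

Lemma dd_le b : dd b <= length l.
Proof. unfold dd. apply filter_length_le. Qed.

Lemma dd_lt b b' : olt alpha b' b -> dd b' < dd b.
Proof.
  intro H. unfold dd. apply filter_lt.
  - intros y. destruct excluded_middle_informative as [h|h]; [|discriminate].
    destruct excluded_middle_informative as [h'|h']; auto. exfalso. apply h'. eapply olt_trans; eauto.
  - destruct b' as [x|]; [|destruct b; simpl in H; contradiction].
    exists x. split; [apply Hl|]. split.
    + destruct excluded_middle_informative as [h|h]; [reflexivity|contradiction].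
    + destruct excluded_middle_informative as [h|h]; [simpl in h; exfalso; eapply wlt_irrefl; eauto|reflexivity].
Qed.

Definition Qd (M N : structure t) (s : state t alpha M N) : Prop :=
  is_state theta s /\ (forall x y, ~ sg s x y) /\
  (forall x, sA1 s x -> sn s + dd (sbeta s) < sh1 s x) /\
  (forall y, sA2 s y -> sn s + dd (sbeta s) < sh2 s y).

Lemma delay_side1 (M N : structure t) : Side1 t theta alpha M N (Qd M N).
Proof.
  intros s [Is [Hg [Hh1 Hh2]]] beta' A' Hlt HAS HcA.
  pose proof Is as Isc. dstate Isc C1 C2 FF II D1 D2 PP B1 B2.
  pose proof (dd_lt _ _ Hlt) as Hd. pose proof (dd_le beta') as Hd'.
  set (n := sn s).
  set (h1' := fun x => match excluded_middle_informative (sA1 s x) with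
                       | left _ => sh1 s x | right _ => S n + length l + 1 end).
  set (s' := Build_state t alpha M N A' (sA2 s) h1' (sh2 s) (fun _ _ => False) beta' (S n)).
  assert (IsS' : is_state theta s').
  { split; [exact HcA|]. split; [exact C2|].
    split; [split; intros; contradiction|]. split; [intros; contradiction|].
    split; [intros; contradiction|]. split; [|split; intros; contradiction].
    apply (preserves_mono t M N (sg s)); auto. intros; contradiction. }
  exists s'. split.
  - split; [exact IsS'|]. split; [reflexivity|]. split; [reflexivity|].
    split; [exact HAS|]. split; [intros y h; exact h|].
    split; [intros x h; simpl; unfold h1'; destruct (excluded_middle_informative (sA1 s x)); [auto|contradiction]|].
    split; [intros y h; reflexivity|].
    split; [intros x y h; exfalso; eapply Hg; eauto|].
    split; [intro x; simpl; tauto|].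
    split; [intro y; simpl; split; [intro h; left; auto|intros [h|[x []]]; auto]|].
    split; [intros x h1 h2; simpl; unfold h1'; destruct (excluded_middle_informative (sA1 s x)); [contradiction|lia]|].
    intro x; simpl. split.
    + intros [y []].
    + intros [h hh]. specialize (Hh1 x h). fold n in Hh1. lia.
  - split; [exact IsS'|]. split; [intros x y hh; exact hh|]. split.
    + intros x h. simpl. unfold h1'. destruct (excluded_middle_informative (sA1 s x)) as [a|a].
      * specialize (Hh1 x a). fold n in Hh1. lia.
      * lia.
    + intros y h. simpl. specialize (Hh2 y h). fold n in Hh2. lia.
Qed.

Lemma E0_delay (M N : structure t) : is_state theta (start_state t alpha M N) -> E0 t theta alpha M N.
Proof.
  intro IsP. split; [exact IsP|].
  apply (bf_wins t theta alpha _ _ (Qd M N)).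
  - apply delay_side1.
  - apply (Side1_iff t theta alpha _ _ (Qd N M)); [|apply delay_side1].
    intro u. unfold swapQ, Qd. split.
    + intros [Is [Hid [H1 H2]]]. split; [apply is_state_swap; auto|].
      split; [intros x y h; exact (Hid _ _ h)|]. split; auto.
    + intros [Is [Hid [H1 H2]]]. split.
      * pose proof (is_state_swap _ _ _ _ _ _ Is) as HH. rewrite swap_swap in HH. exact HH.
      * split; [intros x y h; exact (Hid _ _ h)|]. split; auto.
  - split; [exact IsP|]. simpl. split; [intros x y []|]. split; intros; contradiction.
Qed.

End Delay.

(** agreement on closed quantifier-free sentences *)
Section Agree.
Variables (t : vocab) (theta : Type) (alpha : WellOrder).
Definition agree (M N : structure t) := is_state theta (start_state t alpha M N).

Lemma agree_of_pres (M N : structure t) : preserves_qf t M N (fun _ _ => False) -> agree M N.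
Proof.
  intro P. unfold agree, is_state; simpl. split; [apply empty_card|]. split; [apply empty_card|].
  split; [split; intros; contradiction|]. split; [intros; contradiction|].
  split; [intros; contradiction|]. split; [exact P|split; intros; contradiction].
Qed.

Lemma pres_of_agree (M N : structure t) : agree M N -> preserves_qf t M N (fun _ _ => False).
Proof. intros [_ [_ [_ [_ [_ [P _]]]]]]. exact P. Qed.

Lemma agree_refl M : agree M M.
Proof. apply agree_of_pres. apply preserves_subid. intros; contradiction. Qed.

Lemma agree_sym M N : agree M N -> agree N M.
Proof. intro H. apply is_state_swap in H. exact H. Qed.

Lemma agree_trans M N P : agree M N -> agree N P -> agree M P.
Proof.
  intros H1 H2. apply pres_of_agree in H1. apply pres_of_agree in H2. apply agree_of_pres.
  intros k phi a c Hac. set (b := fun i => False_rect (car N) (Hac i)).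
  rewrite (H1 k phi a b Hac). apply (H2 k phi b c Hac).
Qed.

Lemma E1_agree M N : E1 t theta alpha M N -> agree M N.
Proof.
  induction 1 as [M N [Is _]|M|M N _ IH|M N P _ IH1 _ IH2].
  - exact Is.
  - apply agree_refl.
  - apply agree_sym; auto.
  - eapply agree_trans; eauto.
Qed.

Lemma agree_prod M1 M2 N1 N2 : agree M1 N1 -> agree M2 N2 ->
  agree (prod_struct t M1 M2) (prod_struct t N1 N2).
Proof.
  intros H1 H2. apply agree_of_pres.
  apply (preserves_prod t M1 M2 N1 N2 (fun _ _ => False) (fun _ _ => False));
    [intros; contradiction|apply pres_of_agree; auto|apply pres_of_agree; auto].
Qed.

Lemma agree_sum (H : fsym t -> False) M1 M2 N1 N2 : agree M1 N1 -> agree M2 N2 ->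
  agree (sum_struct t H M1 M2) (sum_struct t H N1 N2).
Proof.
  intros H1 H2. apply agree_of_pres.
  apply (preserves_sum t H M1 M2 N1 N2 (fun _ _ => False) (fun _ _ => False));
    [intros; contradiction|split; intros; contradiction|apply pres_of_agree; auto|apply pres_of_agree; auto].
Qed.

End Agree.

Section Main.
Variables (t : vocab) (theta : Type) (alpha : WellOrder).
Hypothesis Hal : card_le (wcar alpha) theta.

Lemma E1_lift (F : structure t -> structure t) :
  (forall M N, E0 t theta alpha M N -> E0 t theta alpha (F M) (F N)) ->
  forall M N, E1 t theta alpha M N -> E1 t theta alpha (F M) (F N).
Proof.
  intros HF M N H. induction H as [M N H|M|M N _ IH|M N P _ IH1 _ IH2].
  - apply rst_step. auto.
  - apply rst_refl.
  - apply rst_sym. auto.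
  - eapply rst_trans; eauto.
Qed.

Lemma finite_case : ~ card_le nat theta ->
  forall M N, E1 t theta alpha M N <-> agree t theta alpha M N.
Proof.
  intros Hn M N. split; [apply E1_agree|].
  destruct (not_inf_list (wcar alpha)) as [l Hl].
  { intro h. apply Hn. eapply card_le_trans; eauto. }
  intro h. apply rst_step. apply (E0_delay t theta alpha l Hl). exact h.
Qed.

Lemma E1_prod_gen (M1 M2 N1 N2 : structure t) :
  E1 t theta alpha M1 N1 -> E1 t theta alpha M2 N2 ->
  E1 t theta alpha (prod_struct t M1 M2) (prod_struct t N1 N2).
Proof.
  intros H1 H2. destruct (classic (card_le nat theta)) as [Hi|Hn].
  - assert (Habs : forall X Y, card_le X theta -> card_le Y theta -> card_le (X + Y) theta)
      by (intros; apply absorb_sum; auto).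
    apply rst_trans with (prod_struct t N1 M2).
    + apply (E1_lift (fun M => prod_struct t M M2)); auto.
      intros M N h. apply E0_prod; auto. apply E0_refl; auto.
    + apply (E1_lift (fun M => prod_struct t N1 M)); auto.
      intros M N h. apply E0_prod; auto. apply E0_refl; auto.
  - apply (finite_case Hn). apply agree_prod; apply (finite_case Hn); auto.
Qed.

Lemma E1_sum_gen (H : fsym t -> False) (M1 M2 N1 N2 : structure t) :
  E1 t theta alpha M1 N1 -> E1 t theta alpha M2 N2 ->
  E1 t theta alpha (sum_struct t H M1 M2) (sum_struct t H N1 N2).
Proof.
  intros H1 H2. destruct (classic (card_le nat theta)) as [Hi|Hn].
  - assert (Habs : forall X Y, card_le X theta -> card_le Y theta -> card_le (X + Y) theta)
      by (intros; apply absorb_sum; auto).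
    apply rst_trans with (sum_struct t H N1 M2).
    + apply (E1_lift (fun M => sum_struct t H M M2)); auto.
      intros M N h. apply E0_sum; auto. apply E0_refl; auto.
    + apply (E1_lift (fun M => sum_struct t H N1 M)); auto.
      intros M N h. apply E0_sum; auto. apply E0_refl; auto.
  - apply (finite_case Hn). apply agree_sum; apply (finite_case Hn); auto.
Qed.

End Main.

Lemma L1_to_E1 (t : vocab) (K : Type) (M N : structure t) (psi : L1sent t K) :
  L1_equiv t K M N ->
  E1 (subvoc t (s_SP psi) (s_SF psi)) (s_theta psi) (s_alpha psi)
     (reduct t (s_SP psi) (s_SF psi) M) (reduct t (s_SP psi) (s_SF psi) N).
Proof.
  intro HE.
  set (psi' := Build_L1sent t K (s_theta psi) (s_theta_lt t K psi) (s_SP psi) (s_SF psi)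
                 (s_voc_card t K psi) (s_alpha psi) (s_alpha_lt t K psi) unit
                 (ex_intro _ (fun _ _ => True) (fun x y _ => match x, y with tt, tt => eq_refl end))
                 (fun _ => reduct t (s_SP psi) (s_SF psi) M)).
  assert (H1 : L1sat t K M psi') by (exists tt; apply rst_refl).
  apply HE in H1. destruct H1 as [i Hi]. apply rst_sym. exact Hi.
Qed.

Theorem theorem3p14 (K : Type) (HK : beth_fixed_point K) (t : vocab) :
  (forall M1 M2 N1 N2 : structure t,
      L1_equiv t K M1 N1 -> L1_equiv t K M2 N2 ->
      L1_equiv t K (prod_struct t M1 M2) (prod_struct t N1 N2)) /\
  (forall (theta : Type) (alpha : WellOrder),
      card_lt theta K -> card_le (wcar alpha) theta ->
      forall M1 M2 N1 N2 : structure t,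
      E1 t theta alpha M1 N1 -> E1 t theta alpha M2 N2 ->
      E1 t theta alpha (prod_struct t M1 M2) (prod_struct t N1 N2)) /\
  (forall H : fsym t -> False,
      (forall M1 M2 N1 N2 : structure t,
          L1_equiv t K M1 N1 -> L1_equiv t K M2 N2 ->
          L1_equiv t K (sum_struct t H M1 M2) (sum_struct t H N1 N2)) /\
      (forall (theta : Type) (alpha : WellOrder),
          card_lt theta K -> card_le (wcar alpha) theta ->
          forall M1 M2 N1 N2 : structure t,
          E1 t theta alpha M1 N1 -> E1 t theta alpha M2 N2 ->
          E1 t theta alpha (sum_struct t H M1 M2) (sum_struct t H N1 N2))).
Proof.
  split; [|split; [|intro H; split]].
  - intros M1 M2 N1 N2 HE1 HE2 psi.
    pose proof (L1_to_E1 t K M1 N1 psi HE1) as E1'.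
    pose proof (L1_to_E1 t K M2 N2 psi HE2) as E2'.
    pose proof (E1_prod_gen _ _ _ (s_alpha_lt t K psi) _ _ _ _ E1' E2') as EP.
    split; intros [i Hi]; exists i.
    + eapply rst_trans; [apply rst_sym; exact EP|exact Hi].
    + eapply rst_trans; [exact EP|exact Hi].
  - intros theta alpha _ Hal. apply E1_prod_gen; auto.
  - intros M1 M2 N1 N2 HE1 HE2 psi.
    pose proof (L1_to_E1 t K M1 N1 psi HE1) as E1'.
    pose proof (L1_to_E1 t K M2 N2 psi HE2) as E2'.
    pose proof (E1_sum_gen _ _ _ (s_alpha_lt t K psi) (fun f : fsym (subvoc t (s_SP psi) (s_SF psi)) => H (proj1_sig f)) _ _ _ _ E1' E2') as EP.
    split; intros [i Hi]; exists i.
    + eapply rst_trans; [apply rst_sym; exact EP|exact Hi].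
    + eapply rst_trans; [exact EP|exact Hi].
  - intros theta alpha _ Hal. apply E1_sum_gen; auto.
Qed.
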